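(* Let $0<q_1<q_2<1$, $a,b,c\in\mathbb{R}$, and consider the complex-valued function $$\Delta(s)=s^{q_1+q_2}+as^{q_2}+bs^{q_1}+c,$$ where $s^{q_1},s^{q_2},s^{q_1+q_2}$ are principal values of the complex power functions. 1. If $c<0$, then $\Delta(s)$ has at least one positive real root. 2. $\Delta(0)=0$ if and only if $c=0$. 3. Assume $c>0$, and let $a^\star_{c,q_1,q_2}:\mathbb{R}\to\mathbb{R}$ be the function whose graph (in the $(b,a)$-plane) is the curve $b=\rho_1\omega^{q_2}-c\rho_2\omega^{-q_1}$, $a=c\rho_1\omega^{-q_2}-\rho_2\omega^{q_1}$, $\omega>0$, where $\rho_1=\sin\frac{q_1\pi}{2}/\sin\frac{(q_2-q_1)\pi}{2}$ and $\rho_2=\sin\frac{q_2\pi}{2}/\sin\frac{(q_2-q_1)\pi}{2}$; write $a^\star(b,c,q_1,q_2)=a^\star_{c,q_1,q_2}(b)$. Then: (a) if $a\ge 0$ and $b\ge 0$, all roots of $\Delta(s)$ satisfy $\Re(s)<0$; (b) $\Delta(s)$ has a pair of pure imaginary roots if and only if $a=a^\star(b,c,q_1,q_2)$; (c) if $s=s(a,b,c,q_1,q_2)$ is a root of $\Delta(s)$, depending differentiably on $a$, such that $\Re(s(a^\star,b,c,q_1,q_2))=0$ where $a^\star=a^\star(b,c,q_1,q_2)$, then the transversality condition $\frac{\partial \Re(s)}{\partial a}\big|_{a=a^\star}<0$ holds; (d) all roots of $\Delta(s)$ are in the open left half-plane if and only if $a>a^\star(b,c,q_1,q_2)$; (e)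 $\Delta(s)$ has a pair of roots in the open right half-plane if and only if $a<a^\star(b,c,q_1,q_2)$.
   Context: Principal value: $s^{q}=|s|^q e^{iq\arg(s)}$ with $\arg(s)\in(-\pi,\pi]$ (and $0^q=0$). The curve described in part 3 is the graph of a bijective decreasing function $\mathbb{R}\to\mathbb{R}$, so $a^\star_{c,q_1,q_2}$ is well defined. *)

(* Defs.v *)
From Stdlib Require Import Reals Lra ClassicalEpsilon.
From Coquelicot Require Import Coquelicot.
Open Scope R_scope.

(* Principal argument, with values in (-PI, PI] (atan2 convention); Carg 0 = 0. *)
Definition Carg (z : C) : R :=
  let x := fst z in let y := snd z in
  if Rlt_dec 0 x then atan (y / x)
  else if Rlt_dec x 0 then
    (if Rle_dec 0 y then atan (y / x) + PI else atan (y / x) - PI)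
  else if Rlt_dec 0 y then PI / 2
  else if Rlt_dec y 0 then - (PI / 2)
  else 0.

(* Principal power s^q = |s|^q e^{i q arg s}, and 0^q = 0. *)
Definition cpow (s : C) (q : R) : C :=
  if Req_EM_T (Cmod s) 0 then RtoC 0
  else (Rpower (Cmod s) q * cos (q * Carg s), Rpower (Cmod s) q * sin (q * Carg s)).

Definition DeltaQ (q1 q2 a b c : R) (s : C) : C :=
  (cpow s (q1 + q2) + RtoC a * cpow s q2 + RtoC b * cpow s q1 + RtoC c)%C.

Definition rho1 (q1 q2 : R) : R := sin (q1 * PI / 2) / sin ((q2 - q1) * PI / 2).
Definition rho2 (q1 q2 : R) : R := sin (q2 * PI / 2) / sin ((q2 - q1) * PI / 2).

Definition curve_b (c q1 q2 w : R) : R :=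
  rho1 q1 q2 * Rpower w q2 - c * rho2 q1 q2 * Rpower w (- q1).
Definition curve_a (c q1 q2 w : R) : R :=
  c * rho1 q1 q2 * Rpower w (- q2) - rho2 q1 q2 * Rpower w q1.

(* a*_{c,q1,q2}(b): the value curve_a at the (unique) omega > 0 with curve_b omega = b. *)
Definition a_star (b c q1 q2 : R) : R :=
  curve_a c q1 q2
    (epsilon (inhabits 1) (fun w => 0 < w /\ curve_b c q1 q2 w = b)).

(* Main.v *)
Require Import Defs.
From Stdlib Require Import Reals.
From Coquelicot Require Import Coquelicot.
From Stdlib Require Import Lra ClassicalEpsilon.
Open Scope R_scope.

Lemma locally_of_delta (x : R) (P : R -> Prop) :
  (exists del, 0 < del /\ forall y, Rabs (y - x) < del -> P y) -> locally x P.
Proof.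
  intros [del [Hd H]]. exists (mkposreal del Hd). intros y Hy. apply H.
  exact Hy.
Qed.

Lemma delta_of_locally (x : R) (P : R -> Prop) :
  locally x P -> exists del, 0 < del /\ forall y, Rabs (y - x) < del -> P y.
Proof.
  intros [e H]. exists e. split. apply cond_pos. intros y Hy. apply H. exact Hy.
Qed.

Lemma locally_gt (x a : R) : a < x -> locally x (fun y => a < y).
Proof.
  intros H. apply locally_of_delta. exists (x - a). split. lra.
  intros y Hy. apply Rabs_def2 in Hy. lra.
Qed.

Lemma locally_lt (x a : R) : x < a -> locally x (fun y => y < a).
Proof.
  intros H. apply locally_of_delta. exists (a - x). split. lra.
  intros y Hy. apply Rabs_def2 in Hy. lra.
Qed.

Lemma locally_cont_lt (f : R -> R) (x v : R) :
  continuity_pt f x -> f x < v -> locally x (fun y => f y < v).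
Proof.
  intros Hc Hv. apply continuity_pt_locally with (eps := mkposreal (v - f x) ltac:(lra)) in Hc.
  eapply filter_imp; [|exact Hc]. simpl. intros y Hy. apply Rabs_def2 in Hy. lra.
Qed.

Lemma locally_cont_gt (f : R -> R) (x v : R) :
  continuity_pt f x -> v < f x -> locally x (fun y => v < f y).
Proof.
  intros Hc Hv. apply continuity_pt_locally with (eps := mkposreal (f x - v) ltac:(lra)) in Hc.
  eapply filter_imp; [|exact Hc]. simpl. intros y Hy. apply Rabs_def2 in Hy. lra.
Qed.

Lemma Rpower_pos (x y : R) : 0 < Rpower x y.
Proof. unfold Rpower. apply exp_pos. Qed.

Lemma Rpower_1_l (y : R) : Rpower 1 y = 1.
Proof. unfold Rpower. rewrite ln_1, Rmult_0_r. apply exp_0. Qed.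

Lemma Rpower_inv_exp (M q : R) : 0 < M -> q <> 0 -> Rpower (Rpower M (/ q)) q = M.
Proof.
  intros HM Hq. rewrite Rpower_mult. replace (/ q * q) with 1 by (field; auto).
  apply Rpower_1; auto.
Qed.

Lemma Rpower_ge1 (x y : R) : 1 <= x -> 0 <= y -> 1 <= Rpower x y.
Proof.
  intros Hx Hy. unfold Rpower. rewrite <- exp_0.
  destruct (Rle_lt_or_eq_dec 0 (y * ln x)).
  - apply Rmult_le_pos; auto. rewrite <- ln_1. apply ln_le; lra.
  - apply Rlt_le, exp_increasing; auto.
  - rewrite e; lra.
Qed.

Lemma Rpower_le1 (x y : R) : 0 < x <= 1 -> 0 <= y -> Rpower x y <= 1.
Proof.
  intros Hx Hy. unfold Rpower. rewrite <- exp_0.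
  assert (ln x <= 0) by (rewrite <- ln_1; apply ln_le; lra).
  destruct (Rle_lt_or_eq_dec (y * ln x) 0).
  - assert (0 <= y * - ln x) by (apply Rmult_le_pos; lra). lra.
  - apply Rlt_le, exp_increasing; auto.
  - rewrite e; lra.
Qed.

Lemma Rpower_cont (y x : R) : 0 < x -> continuity_pt (fun r => Rpower r y) x.
Proof.
  intros Hx. apply derivable_continuous_pt.
  exists (y * Rpower x (y - 1)). apply derivable_pt_lim_power; auto.
Qed.

Lemma Rpower_derive (y x : R) : 0 < x -> is_derive (fun r => Rpower r y) x (y * (Rpower x y / x)).
Proof.
  intros Hx. apply is_derive_Reals.
  replace (y * (Rpower x y / x)) with (y * Rpower x (y - 1)).
  apply derivable_pt_lim_power; auto.
  unfold Rminus. rewrite Rpower_plus, Rpower_Ropp, Rpower_1; auto.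
Qed.

Lemma Rpower_incr (y a b : R) : 0 < y -> 0 < a -> a < b -> Rpower a y < Rpower b y.
Proof. intros. apply Rlt_Rpower_l; lra. Qed.

Lemma Rpower_opp_decr (y a b : R) : 0 < y -> 0 < a -> a < b -> Rpower b (- y) < Rpower a (- y).
Proof.
  intros. rewrite !Rpower_Ropp. apply Rinv_lt_contravar.
  apply Rmult_lt_0_compat; apply Rpower_pos. apply Rpower_incr; auto.
Qed.

Lemma cpt_mult (f g : R -> R) x : continuity_pt f x -> continuity_pt g x -> continuity_pt (fun t => f t * g t) x.
Proof. intros. apply (continuity_pt_mult f g); auto. Qed.
Lemma cpt_plus (f g : R -> R) x : continuity_pt f x -> continuity_pt g x -> continuity_pt (fun t => f t + g t) x.
Proof. intros. apply (continuity_pt_plus f g); auto. Qed.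
Lemma cpt_minus (f g : R -> R) x : continuity_pt f x -> continuity_pt g x -> continuity_pt (fun t => f t - g t) x.
Proof. intros. apply (continuity_pt_minus f g); auto. Qed.
Lemma cpt_opp (f : R -> R) x : continuity_pt f x -> continuity_pt (fun t => - f t) x.
Proof. intros. apply (continuity_pt_opp f); auto. Qed.
Lemma cpt_div (f g : R -> R) x : continuity_pt f x -> continuity_pt g x -> g x <> 0 -> continuity_pt (fun t => f t / g t) x.
Proof. intros. apply (continuity_pt_div f g); auto. Qed.
Lemma cpt_const (a x : R) : continuity_pt (fun _ => a) x.
Proof. apply continuity_pt_const. intros ? ?; auto. Qed.
Lemma cpt_id (x : R) : continuity_pt (fun t => t) x.
Proof. apply continuity_pt_id. Qed.
Lemma cpt_comp (f g : R -> R) x : continuity_pt f x -> continuity_pt g (f x) -> continuity_pt (fun t => g (f t)) x.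
Proof. intros. apply (continuity_pt_comp f g); auto. Qed.

Definition slope (f : R -> R) (x l y : R) : R :=
  if Req_EM_T y x then l else (f y - f x) / (y - x).

Lemma slope_eq (f : R -> R) x l y : f y - f x = slope f x l y * (y - x).
Proof.
  unfold slope. destruct (Req_EM_T y x). subst. ring. field. lra.
Qed.

Lemma slope_cont (f : R -> R) x l : derivable_pt_lim f x l -> continuity_pt (slope f x l) x.
Proof.
  intros Hd. apply continuity_pt_locally. intros eps.
  destruct (Hd eps (cond_pos eps)) as [del Hdel].
  exists del. intros y Hy. change (Rabs (y - x) < del) in Hy.
  unfold slope. destruct (Req_EM_T x x); [|lra]. destruct (Req_EM_T y x).
  rewrite Rminus_diag, Rabs_R0. apply cond_pos.
  specialize (Hdel (y - x) ltac:(lra) Hy). rewrite Rplus_minus in Hdel. exact Hdel.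
Qed.

Lemma id_mult (f g : R -> R) x df dg : is_derive f x df -> is_derive g x dg ->
  is_derive (fun t => f t * g t) x (df * g x + f x * dg).
Proof.
  intros H1 H2. apply is_derive_Reals. apply is_derive_Reals in H1, H2.
  apply (derivable_pt_lim_mult f g); auto.
Qed.
Lemma id_minus (f g : R -> R) x df dg : is_derive f x df -> is_derive g x dg ->
  is_derive (fun t => f t - g t) x (df - dg).
Proof.
  intros H1 H2. apply is_derive_Reals. apply is_derive_Reals in H1, H2.
  apply (derivable_pt_lim_minus f g); auto.
Qed.
Lemma id_comp (f g : R -> R) x df dg : is_derive f x df -> is_derive g (f x) dg ->
  is_derive (fun t => g (f t)) x (dg * df).
Proof.
  intros H1 H2. apply is_derive_Reals. apply is_derive_Reals in H1, H2.
  apply (derivable_pt_lim_comp f g); auto.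
Qed.
Lemma id_cmult (f : R -> R) (k x df : R) : is_derive f x df -> is_derive (fun t => k * f t) x (k * df).
Proof. intros. apply is_derive_scal. auto. Qed.

Lemma is_derive_val (f : R -> R) x l l' : is_derive f x l -> l = l' -> is_derive f x l'.
Proof. intros H E. subst. auto. Qed.

Lemma ln_le_minus1 (u : R) : 0 < u -> ln u <= u - 1.
Proof. intros H. pose proof (exp_ineq1_le (ln u)). rewrite exp_ln in H0 by auto. lra. Qed.

Lemma bernoulli (z l : R) : 0 < z -> 0 < l < 1 -> Rpower z l <= l * z + (1 - l).
Proof.
  intros Hz Hl. set (t := Rpower z l). assert (Ht : 0 < t) by apply Rpower_pos.
  assert (Hlt : ln t = l * ln z) by (unfold t; apply ln_Rpower).
  pose proof (ln_le_minus1 (z / t) ltac:(apply Rdiv_lt_0_compat; lra)) as A.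
  pose proof (ln_le_minus1 (/ t) ltac:(apply Rinv_0_lt_compat; lra)) as B.
  rewrite ln_div in A by lra. rewrite ln_Rinv in B by lra.
  assert (0 <= l * (z / t - 1) + (1 - l) * (/ t - 1)).
  { assert (l * (ln z - ln t) + (1 - l) * (- ln t) = 0) by (rewrite Hlt; ring).
    assert (l * (ln z - ln t) <= l * (z / t - 1)) by (apply Rmult_le_compat_l; lra).
    assert ((1 - l) * (- ln t) <= (1 - l) * (/ t - 1)) by (apply Rmult_le_compat_l; lra).
    lra. }
  assert (l * (z / t - 1) + (1 - l) * (/ t - 1) = (l * z + (1 - l)) / t - 1) by (field; lra).
  rewrite H0 in H.
  assert (1 <= (l * z + (1 - l)) / t) by lra.
  apply Rmult_le_reg_r with (/ t). apply Rinv_0_lt_compat; lra.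
  rewrite Rinv_r by lra. unfold Rdiv in H1. lra.
Qed.

Lemma Rpower_le_exp (x p q : R) : 0 < x <= 1 -> p <= q -> Rpower x q <= Rpower x p.
Proof.
  intros Hx Hpq. unfold Rpower. assert (ln x <= 0) by (rewrite <- ln_1; apply ln_le; lra).
  destruct (Rle_lt_or_eq_dec (q * ln x) (p * ln x)). nra.
  left; apply exp_increasing; auto. rewrite e; lra.
Qed.

Lemma Rpower_ge_exp (x p q : R) : 1 <= x -> p <= q -> Rpower x p <= Rpower x q.
Proof.
  intros Hx Hpq. unfold Rpower. assert (0 <= ln x) by (rewrite <- ln_1; apply ln_le; lra).
  destruct (Rle_lt_or_eq_dec (p * ln x) (q * ln x)). nra.
  left; apply exp_increasing; auto. rewrite e; lra.
Qed.

Definition Freal (q1 q2 a b c x : R) := Rpower x (q1 + q2) + a * Rpower x q2 + b * Rpower x q1 + c.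

Lemma Freal_cont (q1 q2 a b c x : R) : 0 < x -> continuity_pt (Freal q1 q2 a b c) x.
Proof.
  intros Hx. unfold Freal. repeat apply cpt_plus.
  apply Rpower_cont; auto. apply cpt_mult. apply cpt_const. apply Rpower_cont; auto.
  apply cpt_mult. apply cpt_const. apply Rpower_cont; auto. apply cpt_const.
Qed.

Lemma Freal_small (q1 q2 a b c eps B : R) : 0 < q1 -> q1 < q2 -> 0 < eps -> 0 < B ->
  exists x, 0 < x <= B /\ Rabs (Freal q1 q2 a b c x - c) < eps.
Proof.
  intros Hq1 Hq12 He HB.
  set (K := 1 + Rabs a + Rabs b).
  assert (HK : 0 < K) by (unfold K; pose proof (Rabs_pos a); pose proof (Rabs_pos b); lra).
  set (m := Rmin 1 (eps / (2 * K))).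
  assert (Hm : 0 < m) by (apply Rmin_glb_lt; [lra| apply Rdiv_lt_0_compat; lra]).
  assert (Hm1 : m <= 1) by apply Rmin_l.
  assert (Hm2 : m <= eps / (2 * K)) by apply Rmin_r.
  set (x1 := Rpower m (/ q1)).
  assert (Hx1 : 0 < x1) by apply Rpower_pos.
  assert (Hx11 : x1 <= 1) by (apply Rpower_le1; [lra| apply Rlt_le, Rinv_0_lt_compat; lra]).
  set (x := Rmin x1 B).
  assert (Hx : 0 < x) by (apply Rmin_glb_lt; lra).
  assert (Hxx1 : x <= x1) by apply Rmin_l.
  exists x. split. split; auto. apply Rmin_r.
  assert (Xq1 : Rpower x q1 <= m).
  { replace m with (Rpower x1 q1) by (apply Rpower_inv_exp; lra). apply Rle_Rpower_l; lra. }
  assert (Xq2 : Rpower x q2 <= Rpower x q1) by (apply Rpower_le_exp; lra).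
  assert (Xq12 : Rpower x (q1 + q2) <= Rpower x q1) by (apply Rpower_le_exp; lra).
  pose proof (Rpower_pos x q1). pose proof (Rpower_pos x q2). pose proof (Rpower_pos x (q1 + q2)).
  unfold Freal. replace (Rpower x (q1 + q2) + a * Rpower x q2 + b * Rpower x q1 + c - c)
    with (Rpower x (q1 + q2) + a * Rpower x q2 + b * Rpower x q1) by ring.
  eapply Rle_lt_trans. apply Rabs_triang. eapply Rle_lt_trans. apply Rplus_le_compat_r. apply Rabs_triang.
  rewrite !Rabs_mult. rewrite (Rabs_right (Rpower x (q1 + q2))) by lra.
  rewrite (Rabs_right (Rpower x q2)) by lra. rewrite (Rabs_right (Rpower x q1)) by lra.
  pose proof (Rabs_pos a). pose proof (Rabs_pos b).
  assert (Rabs a * Rpower x q2 <= Rabs a * Rpower x q1) by (apply Rmult_le_compat_l; lra).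
  assert (K * Rpower x q1 <= K * (eps / (2 * K))) by (apply Rmult_le_compat_l; lra).
  assert (K * (eps / (2 * K)) = eps / 2) by (field; lra).
  assert (Rabs b * Rpower x q1 <= Rabs b * Rpower x q1) by lra.
  unfold K in *. nra.
Qed.

Lemma Freal_large (q1 q2 a b c : R) : 0 < q1 -> q1 < q2 ->
  exists x, 1 <= x /\ 0 < Freal q1 q2 a b c x.
Proof.
  intros Hq1 Hq12.
  set (M := Rabs a + Rabs b + Rabs c + 1).
  assert (HM : 1 <= M) by (unfold M; pose proof (Rabs_pos a); pose proof (Rabs_pos b); pose proof (Rabs_pos c); lra).
  set (x := Rpower M (/ q1)).
  assert (Hx : 1 <= x) by (apply Rpower_ge1; [lra| apply Rlt_le, Rinv_0_lt_compat; lra]).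
  exists x. split; auto.
  assert (Xq1 : Rpower x q1 = M) by (apply Rpower_inv_exp; lra).
  assert (Xq2 : 1 <= Rpower x q2) by (apply Rpower_ge1; lra).
  assert (Xq12 : Rpower x q1 <= Rpower x q2) by (apply Rpower_ge_exp; lra).
  unfold Freal. rewrite Rpower_plus, Xq1 in *.
  pose proof (Rabs_pos a). pose proof (Rabs_pos b).
  pose proof (Rle_abs (- a)). pose proof (Rle_abs (- b)). pose proof (Rle_abs (- c)).
  rewrite Rabs_Ropp in *.
  pose proof (Rabs_pos c).
  assert (0 <= (a + Rabs a) * Rpower x q2) by (apply Rmult_le_pos; lra).
  assert (0 <= (b + Rabs b) * M) by (apply Rmult_le_pos; lra).
  assert (0 <= Rabs b * (Rpower x q2 - M)) by (apply Rmult_le_pos; lra).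
  assert (M * Rpower x q2 - Rabs a * Rpower x q2 - Rabs b * Rpower x q2 = (Rabs c + 1) * Rpower x q2) by (unfold M; ring).
  assert (0 <= (Rabs c + 1) * (Rpower x q2 - 1)) by (apply Rmult_le_pos; lra).
  nra.
Qed.

Lemma id_div (f g : R -> R) x df dg : is_derive f x df -> is_derive g x dg -> g x <> 0 ->
  is_derive (fun t => f t / g t) x ((df * g x - dg * f x) / (g x)²).
Proof.
  intros H1 H2 H3. apply is_derive_Reals. apply is_derive_Reals in H1, H2.
  apply (derivable_pt_lim_div f g); auto.
Qed.

Lemma ex_derive_cpt (f : R -> R) x : ex_derive f x -> continuity_pt f x.
Proof.
  intros H. apply continuity_pt_filterlim. apply ex_derive_continuous in H. exact H.
Qed.

Lemma id_const (k x : R) : is_derive (fun _ => k) x 0.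
Proof. apply is_derive_Reals. apply derivable_pt_lim_const. Qed.

Lemma id_id (x : R) : is_derive (fun t => t) x 1.
Proof. apply is_derive_Reals. apply derivable_pt_lim_id. Qed.

Lemma PI_gt3 : 3 < PI.
Proof. pose proof PI2_3_2. lra. Qed.

Lemma continuity_pt_ext_loc (f g : R -> R) (x : R) :
  locally x (fun y => f y = g y) -> continuity_pt f x -> continuity_pt g x.
Proof.
  intros Hl Hc. apply continuity_pt_locally. intros eps.
  apply continuity_pt_locally with (eps := eps) in Hc.
  assert (Hx : f x = g x) by (apply locally_singleton in Hl; exact Hl).
  eapply filter_imp; [|exact (filter_and _ _ Hl Hc)]. simpl.
  intros y [H1 H2]. rewrite <- H1, <- Hx. exact H2.
Qed.

Definition sinc (x : R) : R := if Req_EM_T x 0 then 1 else sin x / x.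

Lemma sinc_nz (x : R) : x <> 0 -> sinc x = sin x / x.
Proof. intros H. unfold sinc. destruct (Req_EM_T x 0); [contradiction|auto]. Qed.

Lemma sinc_pos (x : R) : -PI < x < PI -> 0 < sinc x.
Proof.
  intros H. unfold sinc. destruct (Req_EM_T x 0). lra.
  destruct (Rlt_or_le 0 x).
  - apply Rdiv_lt_0_compat; auto. apply sin_gt_0; lra.
  - assert (x < 0) by lra.
    assert (Hs : 0 < sin (- x)) by (apply sin_gt_0; lra).
    rewrite sin_neg in Hs.
    replace (sin x / x) with ((- sin x) / (- x)) by (field; lra).
    apply Rdiv_lt_0_compat; lra.
Qed.

Lemma sinc_cont (x : R) : continuity_pt sinc x.
Proof.
  destruct (Req_EM_T x 0) as [->|Hx].
  - apply continuity_pt_locally. intros eps.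
    pose proof (derivable_pt_lim_sin 0) as H. rewrite cos_0 in H.
    destruct (H eps (cond_pos eps)) as [del Hdel].
    exists del. intros y Hy. unfold sinc at 2. destruct (Req_EM_T 0 0); [|lra].
    unfold sinc. destruct (Req_EM_T y 0). rewrite Rminus_diag, Rabs_R0. apply cond_pos.
    specialize (Hdel y n).
    change (Rabs (y - 0) < del) in Hy. rewrite Rminus_0_r in Hy.
    specialize (Hdel Hy). rewrite Rplus_0_l, sin_0, Rminus_0_r in Hdel. exact Hdel.
  - apply continuity_pt_ext_loc with (f := fun y => sin y / y).
    + destruct (Rlt_or_le 0 x).
      * eapply filter_imp; [|apply (locally_gt x 0); auto]. intros y Hy.
        rewrite sinc_nz; lra.
      * eapply filter_imp; [|apply (locally_lt x 0); lra]. intros y Hy.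
        rewrite sinc_nz; lra.
    + apply (continuity_pt_div sin (fun y => y)); auto.
      apply continuity_sin. apply continuity_pt_id.
Qed.

Lemma sinc_scal_cont (k x : R) : continuity_pt (fun t => sinc (k * t)) x.
Proof.
  apply (continuity_pt_comp (fun t => k * t) sinc).
  apply derivable_continuous_pt. apply derivable_pt_scal. apply derivable_pt_id.
  apply sinc_cont.
Qed.

Section Main.
Variables q1 q2 c b : R.
Hypothesis Hq1 : 0 < q1.
Hypothesis Hq12 : q1 < q2.
Hypothesis Hq2 : q2 < 1.
Hypothesis Hc : 0 < c.

Definition dd := q2 - q1.
Definition Dm (t : R) := -1 < t < 3.

Definition rh1 (t : R) := q1 * sinc (q1 * t) / (dd * sinc (dd * t)).
Definition rh2 (t : R) := q2 * sinc (q2 * t) / (dd * sinc (dd * t)).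

Lemma dd_pos : 0 < dd.
Proof. unfold dd; lra. Qed.

Lemma sinc_k_pos (k t : R) : 0 < k -> k < 1 -> Dm t -> 0 < sinc (k * t).
Proof.
  intros Hk Hk1 [Ht1 Ht2]. apply sinc_pos. pose proof PI_gt3.
  split.
  - destruct (Rle_or_lt 0 t). assert (0 <= k * t) by (apply Rmult_le_pos; lra). lra.
    assert (k * t > -1) by nra. lra.
  - destruct (Rle_or_lt 0 t). assert (k * t < 3) by nra. lra.
    assert (k * t < 0) by nra. lra.
Qed.

Lemma rh1_pos (t : R) : Dm t -> 0 < rh1 t.
Proof.
  intros H. unfold rh1. pose proof dd_pos.
  assert (0 < sinc (q1 * t)) by (apply sinc_k_pos; auto; lra).
  assert (0 < sinc (dd * t)) by (apply sinc_k_pos; auto; unfold dd; lra).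
  apply Rdiv_lt_0_compat; apply Rmult_lt_0_compat; lra.
Qed.

Lemma rh2_pos (t : R) : Dm t -> 0 < rh2 t.
Proof.
  intros H. unfold rh2. pose proof dd_pos.
  assert (0 < sinc (q2 * t)) by (apply sinc_k_pos; auto; lra).
  assert (0 < sinc (dd * t)) by (apply sinc_k_pos; auto; unfold dd; lra).
  apply Rdiv_lt_0_compat; apply Rmult_lt_0_compat; lra.
Qed.

Lemma rh1_cont (t : R) : Dm t -> continuity_pt rh1 t.
Proof.
  intros H. unfold rh1. pose proof dd_pos.
  assert (0 < sinc (dd * t)) by (apply sinc_k_pos; auto; unfold dd; lra).
  apply (continuity_pt_div (fun t => q1 * sinc (q1 * t)) (fun t => dd * sinc (dd * t))).
  apply (continuity_pt_mult (fun _ => q1) (fun t => sinc (q1 * t))).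
  apply continuity_pt_const; intros ? ?; auto. apply sinc_scal_cont.
  apply (continuity_pt_mult (fun _ => dd) (fun t => sinc (dd * t))).
  apply continuity_pt_const; intros ? ?; auto. apply sinc_scal_cont.
  apply Rgt_not_eq. apply Rmult_lt_0_compat; lra.
Qed.

Lemma rh2_cont (t : R) : Dm t -> continuity_pt rh2 t.
Proof.
  intros H. unfold rh2. pose proof dd_pos.
  assert (0 < sinc (dd * t)) by (apply sinc_k_pos; auto; unfold dd; lra).
  apply (continuity_pt_div (fun t => q2 * sinc (q2 * t)) (fun t => dd * sinc (dd * t))).
  apply (continuity_pt_mult (fun _ => q2) (fun t => sinc (q2 * t))).
  apply continuity_pt_const; intros ? ?; auto. apply sinc_scal_cont.
  apply (continuity_pt_mult (fun _ => dd) (fun t => sinc (dd * t))).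
  apply continuity_pt_const; intros ? ?; auto. apply sinc_scal_cont.
  apply Rgt_not_eq. apply Rmult_lt_0_compat; lra.
Qed.

Lemma sin_k_nz (k t : R) : 0 < k -> k < 1 -> Dm t -> t <> 0 -> sin (k * t) <> 0.
Proof.
  intros Hk Hk1 Ht H0. pose proof (sinc_k_pos k t Hk Hk1 Ht) as Hs.
  rewrite sinc_nz in Hs.
  2: { intro E. apply Rmult_integral in E. destruct E; lra. }
  intro E. rewrite E in Hs. unfold Rdiv in Hs. lra.
Qed.

Lemma rh1_nz (t : R) : Dm t -> t <> 0 -> rh1 t = sin (q1 * t) / sin (dd * t).
Proof.
  intros Ht H. pose proof dd_pos. unfold rh1. rewrite !sinc_nz.
  2: { intro E. apply Rmult_integral in E. destruct E; lra. }
  2: { intro E. apply Rmult_integral in E. destruct E; lra. }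
  assert (sin (dd * t) <> 0) by (apply sin_k_nz; auto; unfold dd; lra).
  field. repeat split; auto; lra.
Qed.

Lemma rh2_nz (t : R) : Dm t -> t <> 0 -> rh2 t = sin (q2 * t) / sin (dd * t).
Proof.
  intros Ht H. pose proof dd_pos. unfold rh2. rewrite !sinc_nz.
  2: { intro E. apply Rmult_integral in E. destruct E; lra. }
  2: { intro E. apply Rmult_integral in E. destruct E; lra. }
  assert (sin (dd * t) <> 0) by (apply sin_k_nz; auto; unfold dd; lra).
  field. repeat split; auto; lra.
Qed.

Lemma rh1_0 : rh1 0 = q1 / dd.
Proof. unfold rh1, sinc. rewrite !Rmult_0_r. destruct (Req_EM_T 0 0); [|lra]. field. pose proof dd_pos; lra. Qed.

Lemma rh2_0 : rh2 0 = q2 / dd.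
Proof. unfold rh2, sinc. rewrite !Rmult_0_r. destruct (Req_EM_T 0 0); [|lra]. field. pose proof dd_pos; lra. Qed.

Definition Gb (r t : R) := rh1 t * Rpower r q2 - c * rh2 t * Rpower r (- q1).
Definition Ga (r t : R) := c * rh1 t * Rpower r (- q2) - rh2 t * Rpower r q1.

Lemma Gb_incr (t r1 r2 : R) : Dm t -> 0 < r1 -> r1 < r2 -> Gb r1 t < Gb r2 t.
Proof.
  intros Ht H1 H2. unfold Gb.
  pose proof (rh1_pos t Ht).
  pose proof (rh2_pos t Ht).
  pose proof (Rpower_incr q2 r1 r2 ltac:(lra) H1 H2).
  pose proof (Rpower_opp_decr q1 r1 r2 Hq1 H1 H2).
  assert (0 < c * rh2 t) by (apply Rmult_lt_0_compat; lra).
  nra.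
Qed.

Lemma Gb_incr_le (t r1 r2 : R) : Dm t -> 0 < r1 -> r1 <= r2 -> Gb r1 t <= Gb r2 t.
Proof.
  intros Ht H1 H2. destruct (Rle_lt_or_eq_dec _ _ H2). apply Rlt_le, Gb_incr; auto.
  subst; lra.
Qed.

Lemma Gb_cont_r (t r : R) : 0 < r -> continuity_pt (fun r => Gb r t) r.
Proof.
  intros Hr. unfold Gb.
  apply (continuity_pt_minus (fun r => rh1 t * Rpower r q2) (fun r => c * rh2 t * Rpower r (- q1))).
  apply (continuity_pt_scal (fun r => Rpower r q2)). apply Rpower_cont; auto.
  apply (continuity_pt_scal (fun r => Rpower r (- q1))). apply Rpower_cont; auto.
Qed.

Lemma Gb_cont_t (t r : R) : Dm t -> continuity_pt (fun t => Gb r t) t.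
Proof.
  intros Ht. unfold Gb.
  apply (continuity_pt_minus (fun t => rh1 t * Rpower r q2) (fun t => c * rh2 t * Rpower r (- q1))).
  apply (continuity_pt_mult (fun t => rh1 t) (fun _ => Rpower r q2)).
  apply rh1_cont; auto. apply continuity_pt_const; intros ? ?; auto.
  apply (continuity_pt_mult (fun t => c * rh2 t) (fun _ => Rpower r (- q1))).
  apply (continuity_pt_scal (rh2)). apply rh2_cont; auto.
  apply continuity_pt_const; intros ? ?; auto.
Qed.

Lemma Gb_exists (t : R) : Dm t -> exists r, 0 < r /\ Gb r t = b.
Proof.
  intros Ht.
  pose proof (rh1_pos t Ht) as Hp1.
  pose proof (rh2_pos t Ht) as Hp2.
  set (p1 := rh1 t) in *. set (p2 := rh2 t) in *.
  set (Mh := (Rabs b + c * p2 + 1) / p1 + 1).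
  assert (HMh : 1 < Mh).
  { unfold Mh. assert (0 < (Rabs b + c * p2 + 1) / p1).
    apply Rdiv_lt_0_compat; auto. pose proof (Rabs_pos b). nra. lra. }
  set (rhi := Rpower Mh (/ q2)).
  assert (Hrhi1 : 1 <= rhi) by (apply Rpower_ge1; [lra| apply Rlt_le, Rinv_0_lt_compat; lra]).
  assert (Hrhi : Rpower rhi q2 = Mh) by (apply Rpower_inv_exp; lra).
  assert (Hghi : b < Gb rhi t).
  { unfold Gb. fold p1 p2. rewrite Hrhi. rewrite Rpower_Ropp.
    assert (1 <= Rpower rhi q1) by (apply Rpower_ge1; lra).
    assert (/ Rpower rhi q1 <= 1).
    { rewrite <- Rinv_1. apply Rinv_le_contravar; lra. }
    assert (p1 * Mh = Rabs b + c * p2 + 1 + p1) by (unfold Mh; field; lra).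
    pose proof (Rle_abs b).
    assert (c * p2 * / Rpower rhi q1 <= c * p2).
    { assert (0 < c * p2) by (apply Rmult_lt_0_compat; lra). nra. }
    lra. }
  set (Ml := (Rabs b + p1 + 1) / (c * p2) + 1).
  assert (HMl : 1 < Ml).
  { unfold Ml. assert (0 < (Rabs b + p1 + 1) / (c * p2)).
    apply Rdiv_lt_0_compat. pose proof (Rabs_pos b). lra. apply Rmult_lt_0_compat; lra. lra. }
  set (rlo := Rpower Ml (- / q1)).
  assert (Hrlo0 : 0 < rlo) by apply Rpower_pos.
  assert (Hrlo1 : rlo <= 1).
  { unfold rlo. rewrite Rpower_Ropp. rewrite <- Rinv_1.
    apply Rinv_le_contravar. lra. apply Rpower_ge1. lra. apply Rlt_le, Rinv_0_lt_compat; lra. }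
  assert (Hrlo : Rpower rlo (- q1) = Ml).
  { unfold rlo. rewrite Rpower_mult. replace (- / q1 * - q1) with 1 by (field; lra).
    apply Rpower_1; lra. }
  assert (Hglo : Gb rlo t < b).
  { unfold Gb. fold p1 p2. rewrite Hrlo.
    assert (Rpower rlo q2 <= 1) by (apply Rpower_le1; lra).
    assert (c * p2 * Ml = Rabs b + p1 + 1 + c * p2).
    { unfold Ml. field. split; lra. }
    assert (0 < c * p2) by (apply Rmult_lt_0_compat; lra).
    pose proof (Rle_abs (- b)). rewrite Rabs_Ropp in H2.
    assert (p1 * Rpower rlo q2 <= p1) by nra.
    lra. }
  assert (Hlt : rlo < rhi).
  { destruct (Rle_or_lt rhi rlo); [|auto].
    exfalso. assert (Gb rhi t <= Gb rlo t).
    { destruct (Rle_lt_or_eq_dec _ _ H). apply Rlt_le, Gb_incr; auto. lra. subst; rewrite e; lra. }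
    lra. }
  destruct (Ranalysis5.IVT_interv (fun r => Gb r t - b) rlo rhi) as [r [Hr1 Hr2]].
  - intros a Ha. apply (continuity_pt_minus (fun r => Gb r t) (fun _ => b)).
    apply Gb_cont_r; lra. apply continuity_pt_const; intros ? ?; auto.
  - auto.
  - simpl; lra.
  - simpl; lra.
  - exists r. split. lra. simpl in Hr2; lra.
Qed.

Definition Rf (t : R) : R := epsilon (inhabits 1) (fun r => 0 < r /\ Gb r t = b).

Lemma Rf_spec (t : R) : Dm t -> 0 < Rf t /\ Gb (Rf t) t = b.
Proof. intros Ht. unfold Rf. apply epsilon_spec. apply Gb_exists; auto. Qed.

Lemma Gb_inj (t r1 r2 : R) : Dm t -> 0 < r1 -> 0 < r2 -> Gb r1 t = Gb r2 t -> r1 = r2.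
Proof.
  intros Ht H1 H2 E. destruct (Rtotal_order r1 r2) as [H|[H|H]]; auto.
  pose proof (Gb_incr t r1 r2 Ht H1 H); lra.
  pose proof (Gb_incr t r2 r1 Ht H2 H); lra.
Qed.

Lemma Rf_unique (t r : R) : Dm t -> 0 < r -> Gb r t = b -> r = Rf t.
Proof.
  intros Ht Hr E. destruct (Rf_spec t Ht). apply (Gb_inj t); auto. congruence.
Qed.

Lemma Rf_cont (t0 : R) : Dm t0 -> continuity_pt Rf t0.
Proof.
  intros Ht0. destruct (Rf_spec t0 Ht0) as [HR0 HG0].
  apply continuity_pt_locally. intros eps.
  set (R0 := Rf t0) in *.
  set (rm := R0 - Rmin eps (R0 / 2)).
  set (rp := R0 + eps).
  assert (Hmin1 : Rmin eps (R0/2) <= R0/2) by apply Rmin_r.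
  assert (Hmin2 : Rmin eps (R0/2) <= eps) by apply Rmin_l.
  assert (Hmin3 : 0 < Rmin eps (R0/2)) by (apply Rmin_glb_lt; [apply cond_pos|lra]).
  assert (Hrm : 0 < rm) by (unfold rm; lra).
  assert (Hgm : Gb rm t0 < b) by (rewrite <- HG0; apply Gb_incr; auto; unfold rm; lra).
  assert (Hgp : b < Gb rp t0).
  { rewrite <- HG0; apply Gb_incr; auto. pose proof (cond_pos eps). unfold rp; lra. }
  pose proof (locally_cont_lt (fun t => Gb rm t) t0 b (Gb_cont_t t0 rm Ht0) Hgm) as L1.
  pose proof (locally_cont_gt (fun t => Gb rp t) t0 b (Gb_cont_t t0 rp Ht0) Hgp) as L2.
  pose proof (locally_gt t0 (-1) (proj1 Ht0)) as L3.
  pose proof (locally_lt t0 3 (proj2 Ht0)) as L4.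
  eapply filter_imp; [|exact (filter_and _ _ (filter_and _ _ L1 L2) (filter_and _ _ L3 L4))].
  simpl. intros t [[H1 H2] [H3 H4]].
  assert (Ht : Dm t) by (split; auto).
  destruct (Rf_spec t Ht) as [HR HG].
  assert (rm < Rf t).
  { destruct (Rle_or_lt (Rf t) rm); auto. exfalso.
    pose proof (Gb_incr_le t (Rf t) rm Ht HR H). lra. }
  assert (Rf t < rp).
  { destruct (Rle_or_lt rp (Rf t)); auto. exfalso.
    assert (0 < rp) by (pose proof (cond_pos eps); unfold rp; lra).
    pose proof (Gb_incr_le t rp (Rf t) Ht H5 H0). lra. }
  apply Rabs_def1; unfold rm, rp in *; lra.
Qed.

Definition rh1' (t : R) := (q1 * cos (q1 * t) * sin (dd * t) - dd * sin (q1 * t) * cos (dd * t)) / (sin (dd * t))^2.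
Definition rh2' (t : R) := (q2 * cos (q2 * t) * sin (dd * t) - dd * sin (q2 * t) * cos (dd * t)) / (sin (dd * t))^2.

Lemma locally_Dm_nz (t : R) : Dm t -> t <> 0 -> locally t (fun y => Dm y /\ y <> 0).
Proof.
  intros [H1 H2] H0.
  destruct (Rlt_or_le 0 t).
  - eapply filter_imp; [|exact (filter_and _ _ (filter_and _ _ (locally_gt t (-1) H1) (locally_lt t 3 H2)) (locally_gt t 0 H))].
    intros y [[A B] C]. split. split; auto. lra.
  - eapply filter_imp; [|exact (filter_and _ _ (filter_and _ _ (locally_gt t (-1) H1) (locally_lt t 3 H2)) (locally_lt t 0 ltac:(lra)))].
    intros y [[A B] C]. split. split; auto. lra.
Qed.

Lemma locally_Dm (t : R) : Dm t -> locally t Dm.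
Proof.
  intros [H1 H2].
  eapply filter_imp; [|exact (filter_and _ _ (locally_gt t (-1) H1) (locally_lt t 3 H2))].
  intros y [A B]. split; auto.
Qed.

Lemma rh1_derive (t : R) : Dm t -> t <> 0 -> is_derive (rh1) t (rh1' t).
Proof.
  intros Ht H0.
  apply is_derive_ext_loc with (f := fun y => sin (q1 * y) / sin (dd * y)).
  - eapply filter_imp; [|exact (locally_Dm_nz t Ht H0)]. intros y [A B].
    rewrite rh1_nz; auto.
  - assert (sin (dd * t) <> 0) by (apply sin_k_nz; auto; unfold dd; lra).
    unfold rh1'. auto_derive. auto. field. auto.
Qed.

Lemma rh2_derive (t : R) : Dm t -> t <> 0 -> is_derive (rh2) t (rh2' t).
Proof.
  intros Ht H0.
  apply is_derive_ext_loc with (f := fun y => sin (q2 * y) / sin (dd * y)).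
  - eapply filter_imp; [|exact (locally_Dm_nz t Ht H0)]. intros y [A B].
    rewrite rh2_nz; auto.
  - assert (sin (dd * t) <> 0) by (apply sin_k_nz; auto; unfold dd; lra).
    unfold rh2'. auto_derive. auto. field. auto.
Qed.


Lemma Rpower_dlim (y x : R) : 0 < x -> derivable_pt_lim (fun r => Rpower r y) x (y * (Rpower x y / x)).
Proof. intros. apply is_derive_Reals. apply Rpower_derive; auto. Qed.

Lemma slope_pow_pos (y R0 r : R) : 0 < y -> 0 < R0 -> 0 < r ->
  0 < slope (fun r => Rpower r y) R0 (y * (Rpower R0 y / R0)) r.
Proof.
  intros Hy H0 Hr. unfold slope. destruct (Req_EM_T r R0).
  - apply Rmult_lt_0_compat; auto. apply Rdiv_lt_0_compat; auto. apply Rpower_pos.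
  - destruct (Rlt_or_le r R0).
    + pose proof (Rpower_incr y r R0 Hy Hr H).
      replace ((Rpower r y - Rpower R0 y) / (r - R0)) with ((Rpower R0 y - Rpower r y) / (R0 - r)) by (field; lra).
      apply Rdiv_lt_0_compat; lra.
    + assert (R0 < r) by lra. pose proof (Rpower_incr y R0 r Hy H0 H1).
      apply Rdiv_lt_0_compat; lra.
Qed.

Lemma slope_powopp_neg (y R0 r : R) : 0 < y -> 0 < R0 -> 0 < r ->
  slope (fun r => Rpower r (- y)) R0 (- y * (Rpower R0 (- y) / R0)) r < 0.
Proof.
  intros Hy H0 Hr. unfold slope. destruct (Req_EM_T r R0).
  - assert (0 < y * (Rpower R0 (- y) / R0)).
    { apply Rmult_lt_0_compat; auto. apply Rdiv_lt_0_compat; auto. apply Rpower_pos. }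
    lra.
  - destruct (Rlt_or_le r R0).
    + pose proof (Rpower_opp_decr y r R0 Hy Hr H).
      replace ((Rpower r (- y) - Rpower R0 (- y)) / (r - R0)) with (- ((Rpower r (- y) - Rpower R0 (- y)) / (R0 - r))) by (field; lra).
      assert (0 < (Rpower r (- y) - Rpower R0 (- y)) / (R0 - r)) by (apply Rdiv_lt_0_compat; lra). lra.
    + assert (R0 < r) by lra. pose proof (Rpower_opp_decr y R0 r Hy H0 H1).
      replace ((Rpower r (- y) - Rpower R0 (- y)) / (r - R0)) with (- ((Rpower R0 (- y) - Rpower r (- y)) / (r - R0))) by (field; lra).
      assert (0 < (Rpower R0 (- y) - Rpower r (- y)) / (r - R0)) by (apply Rdiv_lt_0_compat; lra). lra.
Qed.

Definition Rf' (t : R) : R :=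
  let R0 := Rf t in
  - (rh1' t * Rpower R0 q2 - c * rh2' t * Rpower R0 (- q1)) /
    (rh1 t * (q2 * (Rpower R0 q2 / R0)) - c * rh2 t * (- q1 * (Rpower R0 (- q1) / R0))).

Lemma Rf_derive (t0 : R) : Dm t0 -> t0 <> 0 -> is_derive Rf t0 (Rf' t0).
Proof.
  intros Ht0 Hnz. apply is_derive_Reals.
  destruct (Rf_spec t0 Ht0) as [HR0 HG0].
  set (R0 := Rf t0) in *.
  set (sf := slope (fun r => Rpower r q2) R0 (q2 * (Rpower R0 q2 / R0))).
  set (sg := slope (fun r => Rpower r (- q1)) R0 (- q1 * (Rpower R0 (- q1) / R0))).
  set (s1 := slope rh1 t0 (rh1' t0)).
  set (s2 := slope rh2 t0 (rh2' t0)).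
  set (Q := fun t => - (s1 t * Rpower R0 q2 - c * s2 t * Rpower R0 (- q1)) /
                       (rh1 t * sf (Rf t) - c * rh2 t * sg (Rf t))).
  assert (Hden : forall t, Dm t -> 0 < rh1 t * sf (Rf t) - c * rh2 t * sg (Rf t)).
  { intros t Ht. destruct (Rf_spec t Ht) as [HR HG].
    pose proof (slope_pow_pos q2 R0 (Rf t) ltac:(lra) HR0 HR).
    pose proof (slope_powopp_neg q1 R0 (Rf t) Hq1 HR0 HR).
    pose proof (rh1_pos t Ht). pose proof (rh2_pos t Ht).
    fold sf sg in H, H0.
    assert (0 < rh1 t * sf (Rf t)) by (apply Rmult_lt_0_compat; lra).
    assert (0 < c * rh2 t) by (apply Rmult_lt_0_compat; lra).
    assert (c * rh2 t * sg (Rf t) < 0).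
    { rewrite <- (Rmult_0_r (c * rh2 t)). apply Rmult_lt_compat_l; lra. }
    lra. }
  assert (Hid : forall t, Dm t -> (Rf t - R0) = (t - t0) * Q t).
  { intros t Ht. destruct (Rf_spec t Ht) as [HR HG].
    pose proof (Hden t Ht) as Hd.
    pose proof (slope_eq (fun r => Rpower r q2) R0 (q2 * (Rpower R0 q2 / R0)) (Rf t)) as E1.
    pose proof (slope_eq (fun r => Rpower r (- q1)) R0 (- q1 * (Rpower R0 (- q1) / R0)) (Rf t)) as E2.
    pose proof (slope_eq rh1 t0 (rh1' t0) t) as E3.
    pose proof (slope_eq rh2 t0 (rh2' t0) t) as E4.
    fold sf sg s1 s2 in E1, E2, E3, E4. simpl in E1, E2.
    unfold Gb in HG, HG0. unfold Q.
    apply Rmult_eq_reg_r with (rh1 t * sf (Rf t) - c * rh2 t * sg (Rf t)); [|lra].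
    field_simplify; [|lra].
    assert (EE : rh1 t * Rpower (Rf t) q2 - c * rh2 t * Rpower (Rf t) (- q1) =
                 rh1 t0 * Rpower R0 q2 - c * rh2 t0 * Rpower R0 (- q1)) by lra.
    replace (Rpower (Rf t) q2) with (Rpower R0 q2 + sf (Rf t) * (Rf t - R0)) in EE by lra.
    replace (Rpower (Rf t) (- q1)) with (Rpower R0 (- q1) + sg (Rf t) * (Rf t - R0)) in EE by lra.
    replace (rh1 t) with (rh1 t0 + s1 t * (t - t0)) in EE |- * by lra.
    replace (rh2 t) with (rh2 t0 + s2 t * (t - t0)) in EE |- * by lra.
    lra. }
  assert (HQ0 : Q t0 = Rf' t0).
  { unfold Q, Rf', sf, sg, s1, s2, slope. fold R0.
    destruct (Req_EM_T t0 t0); [|lra]. destruct (Req_EM_T R0 R0); [|lra]. reflexivity. }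
  assert (HQc : continuity_pt Q t0).
  { unfold Q. apply cpt_div.
    - apply cpt_opp. apply cpt_minus.
      + apply cpt_mult. apply slope_cont. apply is_derive_Reals, rh1_derive; auto. apply cpt_const.
      + apply cpt_mult. apply cpt_mult. apply cpt_const. apply slope_cont. apply is_derive_Reals, rh2_derive; auto. apply cpt_const.
    - apply cpt_minus.
      + apply cpt_mult. apply rh1_cont; auto. apply cpt_comp. apply Rf_cont; auto.
        apply slope_cont. apply Rpower_dlim; auto.
      + apply cpt_mult. apply cpt_mult. apply cpt_const. apply rh2_cont; auto.
        apply cpt_comp. apply Rf_cont; auto. apply slope_cont. apply Rpower_dlim; auto.
    - pose proof (Hden t0 Ht0). lra. }
  rewrite <- HQ0. intros eps Heps.
  pose proof (proj1 (continuity_pt_locally Q t0) HQc (mkposreal eps Heps)) as L.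
  destruct (delta_of_locally t0 _ (filter_and _ _ L (locally_Dm t0 Ht0))) as [del [Hdel H]].
  exists (mkposreal del Hdel). intros h Hh Hhd. simpl in Hhd.
  destruct (H (t0 + h)) as [H1 H2]. replace (t0 + h - t0) with h by ring. auto.
  fold R0. rewrite (Hid (t0 + h) H2).
  replace ((t0 + h - t0) * Q (t0 + h) / h) with (Q (t0 + h)) by (field; auto).
  exact H1.
Qed.

Definition aa (t : R) : R := Ga (Rf t) t.

Definition aa' (t : R) : R :=
  c * (rh1' t * Rpower (Rf t) (- q2) + rh1 t * ((- q2) * (Rpower (Rf t) (- q2) / Rf t) * Rf' t))
  - (rh2' t * Rpower (Rf t) q1 + rh2 t * (q1 * (Rpower (Rf t) q1 / Rf t) * Rf' t)).

Lemma aa_cont (t : R) : Dm t -> continuity_pt aa t.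
Proof.
  intros Ht. destruct (Rf_spec t Ht) as [HR _]. unfold aa, Ga. apply cpt_minus.
  - apply cpt_mult. apply cpt_mult. apply cpt_const. apply rh1_cont; auto.
    apply (cpt_comp Rf (fun r => Rpower r (- q2))). apply Rf_cont; auto. apply Rpower_cont; auto.
  - apply cpt_mult. apply rh2_cont; auto.
    apply (cpt_comp Rf (fun r => Rpower r q1)). apply Rf_cont; auto. apply Rpower_cont; auto.
Qed.

Lemma aa_derive (t : R) : Dm t -> t <> 0 -> is_derive aa t (aa' t).
Proof.
  intros Ht H0. destruct (Rf_spec t Ht) as [HR _].
  assert (D1 : is_derive (fun s => Rpower (Rf s) (- q2)) t ((- q2 * (Rpower (Rf t) (- q2) / Rf t)) * Rf' t)).
  { apply (id_comp Rf (fun r => Rpower r (- q2))). apply Rf_derive; auto. apply Rpower_derive; auto. }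
  assert (D2 : is_derive (fun s => Rpower (Rf s) q1) t ((q1 * (Rpower (Rf t) q1 / Rf t)) * Rf' t)).
  { apply (id_comp Rf (fun r => Rpower r q1)). apply Rf_derive; auto. apply Rpower_derive; auto. }
  assert (D3 : is_derive (fun s => c * rh1 s) t (c * rh1' t)).
  { apply id_cmult. apply rh1_derive; auto. }
  pose proof (id_mult _ _ t _ _ D3 D1) as D4.
  pose proof (id_mult _ _ t _ _ (rh2_derive t Ht H0) D2) as D5.
  pose proof (id_minus _ _ t _ _ D4 D5) as D6.
  unfold aa, Ga, aa'. eapply is_derive_val. exact D6. simpl. ring.
Qed.

Lemma g_decr (x y : R) : 0 < x -> x < y -> y < PI / 2 -> y * cos y / sin y < x * cos x / sin x.
Proof.
  intros Hx Hxy Hy.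
  assert (Hs : forall z, 0 < z -> z < PI / 2 -> 0 < sin z) by (intros; apply sin_gt_0; lra).
  destruct (MVT_gen (fun z => z * cos z / sin z) x y (fun z => (sin z * cos z - z) / (sin z)^2)) as [z [Hz E]].
  - intros z0 Hz0. rewrite Rmin_left in Hz0 by lra. rewrite Rmax_right in Hz0 by lra.
    assert (sin z0 <> 0) by (apply Rgt_not_eq, Hs; lra).
    auto_derive. auto. pose proof (sin2_cos2 z0) as HH. unfold Rsqr in HH.
    apply Rminus_diag_uniq. match goal with |- ?L = 0 => replace L with (z0 * (1 - (sin z0 * sin z0 + cos z0 * cos z0)) / sin z0 ^2) by (field; auto) end.
    rewrite HH. field. auto.
  - intros z0 Hz0. rewrite Rmin_left in Hz0 by lra. rewrite Rmax_right in Hz0 by lra.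
    apply cpt_div. apply cpt_mult. apply cpt_id. apply continuity_cos. apply continuity_sin.
    apply Rgt_not_eq, Hs; lra.
  - rewrite Rmin_left in Hz by lra. rewrite Rmax_right in Hz by lra.
    assert (0 < sin z) by (apply Hs; lra).
    assert (sin z * cos z < z).
    { pose proof (sin_lt_x (2 * z) ltac:(lra)). rewrite sin_2a in H0. lra. }
    assert ((sin z * cos z - z) / sin z ^ 2 < 0).
    { apply Rdiv_neg_pos. lra. apply pow_lt; auto. }
    assert (((sin z * cos z - z) / sin z ^ 2) * (y - x) < 0).
    { apply Rmult_neg_pos; lra. }
    lra.
Qed.

Lemma trig_K (t : R) : 0 < t <= PI / 2 ->
  0 < q1^2 * cos (q1 * t) * sin (q2 * t) * sin (dd * t) - q2^2 * sin (q1 * t) * cos (q2 * t) * sin (dd * t)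
      + dd^2 * sin (q1 * t) * sin (q2 * t) * cos (dd * t).
Proof.
  intros [Ht1 Ht2]. pose proof dd_pos. pose proof PI_RGT_0.
  set (u := q1 * t). set (v := q2 * t). set (w := dd * t).
  assert (Hu : 0 < u) by (unfold u; nra). assert (Hw : 0 < w) by (unfold w; nra).
  assert (Huv : u < v) by (unfold u, v; nra). assert (Hwv : w < v) by (unfold w, v, dd; nra).
  assert (Hv : v < PI / 2) by (unfold v; nra).
  assert (Huw : v = u + w) by (unfold u, v, w, dd; ring).
  assert (su : 0 < sin u) by (apply sin_gt_0; lra).
  assert (sv : 0 < sin v) by (apply sin_gt_0; lra).
  assert (sw : 0 < sin w) by (apply sin_gt_0; lra).
  pose proof (g_decr u v Hu Huv Hv) as G1.
  pose proof (g_decr w v Hw Hwv Hv) as G2.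
  set (Gu := u * cos u / sin u) in *. set (Gv := v * cos v / sin v) in *. set (Gw := w * cos w / sin w) in *.
  assert (E : (q1^2 * cos u * sin v * sin w - q2^2 * sin u * cos v * sin w + dd^2 * sin u * sin v * cos w) * t^2
              = sin u * sin v * sin w * (u * Gu + w * Gw - v * Gv)).
  { unfold Gu, Gv, Gw. unfold u, v, w in *. field. repeat split; lra. }
  assert (0 < u * Gu + w * Gw - v * Gv).
  { rewrite Huw. assert (u * Gv < u * Gu) by (apply Rmult_lt_compat_l; lra).
    assert (w * Gv < w * Gw) by (apply Rmult_lt_compat_l; lra). lra. }
  assert (0 < sin u * sin v * sin w * (u * Gu + w * Gw - v * Gv)).
  { apply Rmult_lt_0_compat; auto. apply Rmult_lt_0_compat; auto. apply Rmult_lt_0_compat; auto. }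
  assert (0 < t^2) by (apply pow_lt; lra).
  destruct (Rle_or_lt (q1^2 * cos u * sin v * sin w - q2^2 * sin u * cos v * sin w + dd^2 * sin u * sin v * cos w) 0); [|auto].
  exfalso. assert ((q1^2 * cos u * sin v * sin w - q2^2 * sin u * cos v * sin w + dd^2 * sin u * sin v * cos w) * t^2 <= 0).
  { apply Rmult_le_0_r; lra. } lra.
Qed.

Lemma trig_D (t : R) : 0 < t <= PI / 2 ->
  0 < (q1 * cos (q1 * t) - q2 * cos (q2 * t)) * sin (dd * t) + dd * cos (dd * t) * (sin (q2 * t) - sin (q1 * t)).
Proof.
  intros [Ht1 Ht2]. pose proof dd_pos. pose proof PI_RGT_0.
  set (m := (q1 + q2) / 2). set (h := dd / 2).
  set (MM := m * t). set (HH := h * t).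
  assert (E1 : q1 * t = MM - HH) by (unfold MM, HH, m, h, dd; field).
  assert (E2 : q2 * t = MM + HH) by (unfold MM, HH, m, h, dd; field).
  assert (E3 : dd * t = 2 * HH) by (unfold HH, h; field).
  assert (Eq1 : q1 = m - h) by (unfold m, h, dd; field).
  assert (Eq2 : q2 = m + h) by (unfold m, h, dd; field).
  assert (Ed : dd = 2 * h) by (unfold h; field).
  rewrite E1, E2, E3. rewrite Eq1 at 1. rewrite Eq2 at 1. rewrite Ed at 1.
  rewrite sin_minus, sin_plus, cos_minus, cos_plus, sin_2a, cos_2a.
  assert (HM : 0 < MM < PI / 2) by (unfold MM, m; split; nra).
  assert (HHb : 0 < HH < PI / 2) by (unfold HH, h, dd; split; nra).
  assert (sM : 0 < sin MM) by (apply sin_gt_0; lra).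
  assert (sH : 0 < sin HH) by (apply sin_gt_0; lra).
  assert (cH : 0 < cos HH) by (apply cos_gt_0; lra).
  assert (Hmh : h < m) by (unfold h, m, dd; lra).
  assert (Hh : 0 < h) by (unfold h; lra).
  assert (su : 0 < sin MM * cos HH - cos MM * sin HH).
  { rewrite <- sin_minus. assert (0 < q1 * t) by nra. apply sin_gt_0; lra. }
  match goal with |- 0 < ?e => assert (Eq : e = 4 * (sin HH)^2 * ((m - h) * sin MM * cos HH + h * (sin MM * cos HH - cos MM * sin HH))) by ring end.
  rewrite Eq. apply Rmult_lt_0_compat. apply Rmult_lt_0_compat. lra. apply pow_lt; auto.
  assert (0 < (m - h) * sin MM * cos HH).
  { apply Rmult_lt_0_compat; auto. apply Rmult_lt_0_compat; lra. }
  assert (0 < h * (sin MM * cos HH - cos MM * sin HH)) by (apply Rmult_lt_0_compat; auto).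
  lra.
Qed.

Lemma aa'_pos (t : R) : 0 < t <= PI / 2 -> 0 < aa' t.
Proof.
  intros Ht. pose proof PI2_3_2. pose proof dd_pos.
  assert (HD : Dm t) by (pose proof PI_4; split; lra).
  assert (Hnz : t <> 0) by lra.
  destruct (Rf_spec t HD) as [HR _].
  pose proof (trig_K t Ht) as TK. pose proof (trig_D t Ht) as TD.
  assert (sw : 0 < sin (dd * t)).
  { pose proof PI_4. pose proof PI_gt3. assert (dd < 1) by (unfold dd; lra). apply sin_gt_0. nra. nra. }
  assert (su : 0 < sin (q1 * t)) by (apply sin_gt_0; [nra| assert (q1 * t < t) by nra; lra]).
  assert (sv : 0 < sin (q2 * t)) by (apply sin_gt_0; [nra| assert (q2 * t < t) by nra; lra]).
  assert (Kpos : 0 < q1 * rh1' t * rh2 t - q2 * rh1 t * rh2' t).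
  { rewrite rh1_nz, rh2_nz; auto. unfold rh1', rh2'.
    replace (q1 * ((q1 * cos (q1 * t) * sin (dd * t) - dd * sin (q1 * t) * cos (dd * t)) / sin (dd * t) ^ 2) *
       (sin (q2 * t) / sin (dd * t)) - q2 * (sin (q1 * t) / sin (dd * t)) *
       ((q2 * cos (q2 * t) * sin (dd * t) - dd * sin (q2 * t) * cos (dd * t)) / sin (dd * t) ^ 2))
    with ((q1^2 * cos (q1 * t) * sin (q2 * t) * sin (dd * t) - q2^2 * sin (q1 * t) * cos (q2 * t) * sin (dd * t)
      + dd^2 * sin (q1 * t) * sin (q2 * t) * cos (dd * t)) / (sin (dd * t))^3).
    2: { unfold dd in *. field. lra. }
    apply Rdiv_lt_0_compat; auto. apply pow_lt; auto. }
  assert (Dpos : 0 < rh1' t - rh2' t).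
  { unfold rh1', rh2'.
    replace ((q1 * cos (q1 * t) * sin (dd * t) - dd * sin (q1 * t) * cos (dd * t)) / sin (dd * t) ^ 2 -
      (q2 * cos (q2 * t) * sin (dd * t) - dd * sin (q2 * t) * cos (dd * t)) / sin (dd * t) ^ 2)
    with (((q1 * cos (q1 * t) - q2 * cos (q2 * t)) * sin (dd * t) + dd * cos (dd * t) * (sin (q2 * t) - sin (q1 * t))) / sin (dd * t) ^ 2).
    2: { field. lra. }
    apply Rdiv_lt_0_compat; auto. apply pow_lt; auto. }
  pose proof (rh1_pos t HD) as P1. pose proof (rh2_pos t HD) as P2.
  unfold aa', Rf'.
  rewrite !Rpower_Ropp.
  set (R0 := Rf t) in *. set (X := Rpower R0 q1). set (Y := Rpower R0 q2).
  assert (HX : 0 < X) by apply Rpower_pos. assert (HY : 0 < Y) by apply Rpower_pos.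
  set (p1 := rh1 t) in *. set (p2 := rh2 t) in *. set (d1 := rh1' t) in *. set (d2 := rh2' t) in *.
  set (K := q1 * d1 * p2 - q2 * p1 * d2) in *.
  assert (HD0 : 0 < q2 * p1 * Y + c * q1 * p2 / X).
  { assert (0 < q2 * p1 * Y) by (apply Rmult_lt_0_compat; [apply Rmult_lt_0_compat|]; lra).
    assert (0 < c * q1 * p2 / X) by (apply Rdiv_lt_0_compat; [apply Rmult_lt_0_compat; [apply Rmult_lt_0_compat|]|]; lra).
    lra. }
  assert (E : c * (d1 * / Y + p1 * (- q2 * (/ Y / R0) * (- (d1 * Y - c * d2 * / X) /
         (p1 * (q2 * (Y / R0)) - c * p2 * (- q1 * (/ X / R0)))))) -
      (d2 * X + p2 * (q1 * (X / R0) * (- (d1 * Y - c * d2 * / X) /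
         (p1 * (q2 * (Y / R0)) - c * p2 * (- q1 * (/ X / R0))))))
     = (2 * c * X * Y * ((d1 - d2) * (q2 * p1 + q1 * p2)) + (X * Y - c)^2 * K) / ((q2 * p1 * Y + c * q1 * p2 / X) * (X * Y))).
  { assert (0 < q2 * p1 * Y * X + c * q1 * p2).
    { assert (0 < q2 * p1) by (apply Rmult_lt_0_compat; lra).
      assert (0 < q2 * p1 * Y) by (apply Rmult_lt_0_compat; lra).
      assert (0 < q2 * p1 * Y * X) by (apply Rmult_lt_0_compat; lra).
      assert (0 < c * q1) by (apply Rmult_lt_0_compat; lra).
      assert (0 < c * q1 * p2) by (apply Rmult_lt_0_compat; lra).
      lra. }
    unfold K. field. repeat split; try lra. }
  rewrite E. apply Rdiv_lt_0_compat.
  - assert (0 < 2 * c * X * Y * ((d1 - d2) * (q2 * p1 + q1 * p2))).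
    { repeat apply Rmult_lt_0_compat; try lra. nra. }
    assert (0 <= (X * Y - c)^2 * K) by (apply Rmult_le_pos; [apply pow2_ge_0|lra]).
    lra.
  - apply Rmult_lt_0_compat; auto. apply Rmult_lt_0_compat; auto.
Qed.

Lemma aa_incr (t1 t2 : R) : 0 <= t1 -> t1 < t2 -> t2 <= PI / 2 -> aa t1 < aa t2.
Proof.
  intros H1 H12 H2. pose proof PI2_3_2. pose proof PI_4.
  destruct (MVT_gen aa t1 t2 (fun t => if Rlt_dec 0 t then aa' t else 1)) as [z [Hz E]].
  - intros z Hz. rewrite Rmin_left in Hz by lra. rewrite Rmax_right in Hz by lra.
    destruct (Rlt_dec 0 z); [|lra]. apply aa_derive. split; lra. lra.
  - intros z Hz. rewrite Rmin_left in Hz by lra. rewrite Rmax_right in Hz by lra.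
    apply aa_cont. split; lra.
  - rewrite Rmin_left in Hz by lra. rewrite Rmax_right in Hz by lra.
    assert (0 < (if Rlt_dec 0 z then aa' z else 1)).
    { destruct (Rlt_dec 0 z). apply aa'_pos; lra. lra. }
    assert (0 < (if Rlt_dec 0 z then aa' z else 1) * (t2 - t1)) by (apply Rmult_lt_0_compat; lra).
    lra.
Qed.

Lemma Carg_up (x y : R) : 0 < y -> Carg (x, y) = PI / 2 - atan (x / y).
Proof.
  intros Hy. unfold Carg. simpl.
  destruct (Rlt_dec 0 x).
  - replace (y / x) with (/ (x / y)) by (field; lra). apply atan_inv. apply Rdiv_lt_0_compat; lra.
  - destruct (Rlt_dec x 0).
    + destruct (Rle_dec 0 y); [|lra].
      replace (y / x) with (- / (- x / y)) by (field; lra).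
      rewrite atan_opp, atan_inv by (apply Rdiv_lt_0_compat; lra).
      replace (- x / y) with (- (x / y)) by (field; lra). rewrite atan_opp. lra.
    + assert (x = 0) by lra. subst. destruct (Rlt_dec 0 y); [|lra].
      replace (0 / y) with 0 by (field; lra). rewrite atan_0. lra.
Qed.

Lemma Carg_down (x y : R) : y < 0 -> Carg (x, y) = - (PI / 2) - atan (x / y).
Proof.
  intros Hy. unfold Carg. simpl.
  destruct (Rlt_dec 0 x).
  - replace (y / x) with (- / (x / - y)) by (field; lra).
    rewrite atan_opp, atan_inv by (apply Rdiv_lt_0_compat; lra).
    replace (x / - y) with (- (x / y)) by (field; lra). rewrite atan_opp. lra.
  - destruct (Rlt_dec x 0).
    + destruct (Rle_dec 0 y); [lra|].
      replace (y / x) with (/ (x / y)) by (field; lra).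
      assert (Hxy : 0 < x / y) by (replace (x / y) with ((- x) / (- y)) by (field; lra); apply Rdiv_lt_0_compat; lra).
      rewrite atan_inv by exact Hxy. lra.
    + assert (x = 0) by lra. subst. destruct (Rlt_dec 0 y); [lra|].
      destruct (Rlt_dec y 0); [|lra].
      replace (0 / y) with 0 by (field; lra). rewrite atan_0. lra.
Qed.

Lemma Carg_up_range (x y : R) : 0 < y ->
  0 < Carg (x, y) < PI /\ (0 <= x -> Carg (x, y) <= PI / 2) /\ (0 < x -> Carg (x, y) < PI / 2).
Proof.
  intros Hy. rewrite Carg_up by auto. pose proof (atan_bound (x / y)).
  split; [|split].
  - lra.
  - intros Hx. assert (0 <= atan (x / y)).
    { destruct (Rle_lt_or_eq_dec 0 x Hx).
      - rewrite <- atan_0. left. apply atan_increasing. apply Rdiv_lt_0_compat; lra.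
      - subst. replace (0 / y) with 0 by (field; lra). rewrite atan_0. lra. }
    lra.
  - intros Hx. assert (0 < atan (x / y)).
    { rewrite <- atan_0. apply atan_increasing. apply Rdiv_lt_0_compat; lra. }
    lra.
Qed.

Lemma Carg_real (x : R) : 0 < x -> Carg (x, 0) = 0.
Proof.
  intros Hx. unfold Carg. simpl. destruct (Rlt_dec 0 x); [|lra].
  replace (0 / x) with 0 by (field; lra). apply atan_0.
Qed.

Lemma Carg_conj (x y : R) : y <> 0 -> Carg (x, - y) = - Carg (x, y).
Proof.
  intros Hy. destruct (Rlt_or_le 0 y).
  - rewrite Carg_down by lra. rewrite Carg_up by lra.
    replace (x / - y) with (- (x / y)) by (field; lra). rewrite atan_opp. lra.
  - rewrite Carg_up by lra. rewrite Carg_down by lra.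
    replace (x / - y) with (- (x / y)) by (field; lra). rewrite atan_opp. lra.
Qed.

Lemma Cmod_pos2 (x y : R) : (x <> 0 \/ y <> 0) -> 0 < Cmod (x, y).
Proof.
  intros H. unfold Cmod. simpl. apply sqrt_lt_R0.
  destruct H. assert (0 < x * x) by (apply Rsqr_pos_lt; auto). nra.
  assert (0 < y * y) by (apply Rsqr_pos_lt; auto). nra.
Qed.

Lemma Cmod_conj2 (x y : R) : Cmod (x, - y) = Cmod (x, y).
Proof. unfold Cmod. simpl. f_equal. ring. Qed.

Lemma Cmod_real (x : R) : 0 < x -> Cmod (x, 0) = x.
Proof.
  intros Hx. unfold Cmod. simpl. replace (x * (x * 1) + 0 * (0 * 1)) with (x * x) by ring.
  apply sqrt_square. lra.
Qed.

Lemma Cmod_polar (r t : R) : 0 < r -> Cmod (r * cos t, r * sin t) = r.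
Proof.
  intros Hr. unfold Cmod. simpl. pose proof (sin2_cos2 t). unfold Rsqr in H.
  replace (r * cos t * (r * cos t * 1) + r * sin t * (r * sin t * 1)) with (r * r) by nra.
  apply sqrt_square. lra.
Qed.

Lemma Carg_polar (r t : R) : 0 < r -> 0 < t < PI -> Carg (r * cos t, r * sin t) = t.
Proof.
  intros Hr Ht. assert (Hs : 0 < sin t) by (apply sin_gt_0; lra).
  rewrite Carg_up by (apply Rmult_lt_0_compat; lra).
  replace (r * cos t / (r * sin t)) with (tan (PI / 2 - t)).
  - rewrite atan_tan by lra. lra.
  - unfold tan. rewrite sin_shift, cos_shift. field. lra.
Qed.

Definition DX (a r t : R) := Rpower r (q1 + q2) * cos ((q1 + q2) * t) + a * (Rpower r q2 * cos (q2 * t))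
  + b * (Rpower r q1 * cos (q1 * t)) + c.
Definition DY (a r t : R) := Rpower r (q1 + q2) * sin ((q1 + q2) * t) + a * (Rpower r q2 * sin (q2 * t))
  + b * (Rpower r q1 * sin (q1 * t)).

Lemma Delta_comp (a : R) (s : C) : Cmod s <> 0 ->
  DeltaQ q1 q2 a b c s = (DX a (Cmod s) (Carg s), DY a (Cmod s) (Carg s)).
Proof.
  intros H. unfold DeltaQ, cpow, DX, DY.
  destruct (Req_EM_T (Cmod s) 0); [contradiction|].
  unfold Cplus, Cmult, RtoC. simpl. f_equal; ring.
Qed.

Lemma Delta_zero_iff (a : R) (s : C) : Cmod s <> 0 ->
  (DeltaQ q1 q2 a b c s = RtoC 0 <-> DX a (Cmod s) (Carg s) = 0 /\ DY a (Cmod s) (Carg s) = 0).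
Proof.
  intros H. rewrite Delta_comp by auto. unfold RtoC. split.
  - intros E. injection E. auto.
  - intros [E1 E2]. rewrite E1, E2. reflexivity.
Qed.

Lemma root_char (a r t : R) : 0 < r -> 0 < t < 3 ->
  (DX a r t = 0 /\ DY a r t = 0 <-> b = Gb r t /\ a = Ga r t).
Proof.
  intros Hr Ht. pose proof dd_pos as Hdd.
  assert (HD : Dm t) by (split; lra).
  assert (Hsd : sin (dd * t) <> 0) by (apply sin_k_nz; auto; unfold dd; lra).
  unfold Gb, Ga. rewrite rh1_nz, rh2_nz by (auto; lra).
  rewrite !Rpower_Ropp.
  unfold DX, DY. rewrite Rpower_plus.
  set (Xq := Rpower r q1). set (Yq := Rpower r q2).
  assert (HX : 0 < Xq) by apply Rpower_pos. assert (HY : 0 < Yq) by apply Rpower_pos.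
  replace ((q1 + q2) * t) with (q1 * t + q2 * t) by ring.
  replace (dd * t) with (q2 * t - q1 * t) in * by (unfold dd; ring).
  rewrite sin_plus, cos_plus. rewrite sin_minus in *.
  set (s1 := sin (q1 * t)) in *. set (c1 := cos (q1 * t)) in *.
  set (s2 := sin (q2 * t)) in *. set (c2 := cos (q2 * t)) in *.
  assert (P1 : s1 * s1 + c1 * c1 = 1) by (pose proof (sin2_cos2 (q1 * t)); unfold Rsqr in *; auto).
  assert (P2 : s2 * s2 + c2 * c2 = 1) by (pose proof (sin2_cos2 (q2 * t)); unfold Rsqr in *; auto).
  set (sd := s2 * c1 - c2 * s1) in *.
  set (XX := Xq * Yq * (c1 * c2 - s1 * s2) + a * (Yq * c2) + b * (Xq * c1) + c).
  set (YY := Xq * Yq * (s1 * c2 + c1 * s2) + a * (Yq * s2) + b * (Xq * s1)).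
  set (E1 := Xq * Yq * s2 + a * Yq * sd - c * s1).
  set (E2 := Xq * Yq * s1 - b * Xq * sd - c * s2).
  assert (I1 : YY * c1 - XX * s1 = E1).
  { apply Rminus_diag_uniq. replace (YY * c1 - XX * s1 - E1) with (Xq * Yq * s2 * (s1 * s1 + c1 * c1 - 1)) by (unfold YY, XX, E1, sd; ring).
    rewrite P1. ring. }
  assert (I2 : YY * c2 - XX * s2 = E2).
  { apply Rminus_diag_uniq. replace (YY * c2 - XX * s2 - E2) with (Xq * Yq * s1 * (s2 * s2 + c2 * c2 - 1)) by (unfold YY, XX, E2, sd; ring).
    rewrite P2. ring. }
  assert (J1 : YY * sd = E1 * s2 - E2 * s1) by (rewrite <- I1, <- I2; unfold sd; ring).
  assert (J2 : XX * sd = E1 * c2 - E2 * c1) by (rewrite <- I1, <- I2; unfold sd; ring).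
  fold XX YY. split.
  - intros [H1 H2]. rewrite H1, H2 in I1, I2.
    assert (E1 = 0) by lra. assert (E2 = 0) by lra. unfold E1, E2 in *.
    split.
    + apply Rmult_eq_reg_r with (Xq * sd). 2: { apply Rmult_integral_contrapositive; split; lra. }
      field_simplify; auto. lra. split; auto; lra.
    + apply Rmult_eq_reg_r with (Yq * sd). 2: { apply Rmult_integral_contrapositive; split; lra. }
      field_simplify; auto. lra. split; auto; lra.
  - intros [H1 H2].
    assert (E1 = 0) by (unfold E1; rewrite H2; field; split; lra).
    assert (E2 = 0) by (unfold E2; rewrite H1; field; split; lra).
    rewrite H, H0 in J1, J2.
    split.
    + apply Rmult_eq_reg_r with sd; auto. lra.
    + apply Rmult_eq_reg_r with sd; auto. lra.
Qed.

Lemma Delta_real (a x : R) : 0 < x -> DeltaQ q1 q2 a b c (x, 0) = (Freal q1 q2 a b c x, 0).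
Proof.
  intros Hx. rewrite Delta_comp by (rewrite Cmod_real; lra).
  rewrite Cmod_real, Carg_real by auto. unfold DX, DY, Freal.
  rewrite !Rmult_0_r, cos_0, sin_0. f_equal; ring.
Qed.

Lemma DY_neg (a r t : R) : DY a r (- t) = - DY a r t.
Proof.
  unfold DY. replace ((q1 + q2) * - t) with (- ((q1 + q2) * t)) by ring.
  replace (q2 * - t) with (- (q2 * t)) by ring. replace (q1 * - t) with (- (q1 * t)) by ring.
  rewrite !sin_neg. ring.
Qed.

Lemma DX_neg (a r t : R) : DX a r (- t) = DX a r t.
Proof.
  unfold DX. replace ((q1 + q2) * - t) with (- ((q1 + q2) * t)) by ring.
  replace (q2 * - t) with (- (q2 * t)) by ring. replace (q1 * - t) with (- (q1 * t)) by ring.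
  rewrite !cos_neg. ring.
Qed.

Lemma Delta_conj_iff (a x y : R) : y <> 0 ->
  (DeltaQ q1 q2 a b c (x, - y) = RtoC 0 <-> DeltaQ q1 q2 a b c (x, y) = RtoC 0).
Proof.
  intros Hy. assert (H1 : Cmod (x, y) <> 0) by (apply Rgt_not_eq, Cmod_pos2; auto).
  assert (H2 : Cmod (x, - y) <> 0) by (rewrite Cmod_conj2; auto).
  rewrite (Delta_zero_iff a (x, - y) H2), (Delta_zero_iff a (x, y) H1).
  rewrite Cmod_conj2, Carg_conj by auto. rewrite DX_neg, DY_neg.
  split; intros [A B]; split; lra.
Qed.

Lemma Dm_pi2 : Dm (PI / 2).
Proof. pose proof PI2_3_2. pose proof PI_4. split; lra. Qed.

Lemma rh1_pi2 : rh1 (PI / 2) = rho1 q1 q2.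
Proof.
  rewrite rh1_nz. unfold rho1, dd. f_equal; f_equal; field.
  apply Dm_pi2. pose proof PI2_3_2; lra.
Qed.

Lemma rh2_pi2 : rh2 (PI / 2) = rho2 q1 q2.
Proof.
  rewrite rh2_nz. unfold rho2, dd. f_equal; f_equal; field.
  apply Dm_pi2. pose proof PI2_3_2; lra.
Qed.

Lemma Gb_curve (r : R) : Gb r (PI / 2) = curve_b c q1 q2 r.
Proof. unfold Gb, curve_b. rewrite rh1_pi2, rh2_pi2. ring. Qed.

Lemma Ga_curve (r : R) : Ga r (PI / 2) = curve_a c q1 q2 r.
Proof. unfold Ga, curve_a. rewrite rh1_pi2, rh2_pi2. ring. Qed.

Lemma astar_eq : a_star b c q1 q2 = aa (PI / 2).
Proof.
  unfold a_star. destruct (Rf_spec (PI / 2) Dm_pi2) as [HR HG].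
  set (w := epsilon (inhabits 1) (fun w => 0 < w /\ curve_b c q1 q2 w = b)).
  assert (Hw : 0 < w /\ curve_b c q1 q2 w = b).
  { apply epsilon_spec. exists (Rf (PI / 2)). split; auto. rewrite <- Gb_curve. auto. }
  destruct Hw as [Hw1 Hw2]. rewrite <- Gb_curve in Hw2.
  assert (w = Rf (PI / 2)) by (apply Rf_unique; auto; apply Dm_pi2).
  unfold aa. rewrite <- Ga_curve. congruence.
Qed.

Lemma upper_root_aa (a x y : R) : 0 < y -> Carg (x, y) < 3 ->
  DeltaQ q1 q2 a b c (x, y) = RtoC 0 -> a = aa (Carg (x, y)).
Proof.
  intros Hy H3 HD. assert (Hm : 0 < Cmod (x, y)) by (apply Cmod_pos2; lra).
  destruct (Carg_up_range x y Hy) as [[A1 A2] _].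
  apply Delta_zero_iff in HD; [|lra].
  apply root_char in HD; auto. destruct HD as [Hb Ha].
  assert (HDm : Dm (Carg (x, y))) by (split; lra).
  assert (E : Cmod (x, y) = Rf (Carg (x, y))) by (apply Rf_unique; auto).
  unfold aa. rewrite <- E. auto.
Qed.

Lemma quad_root (a x y : R) : 0 < y -> 0 <= x -> DeltaQ q1 q2 a b c (x, y) = RtoC 0 ->
  a <= a_star b c q1 q2 /\ (0 < x -> a < a_star b c q1 q2).
Proof.
  intros Hy Hx HD. destruct (Carg_up_range x y Hy) as [[A1 A2] [A3 A4]].
  pose proof PI2_3_2. pose proof PI_4.
  assert (Ha : a = aa (Carg (x, y))) by (apply upper_root_aa; auto; specialize (A3 Hx); lra).
  rewrite astar_eq. specialize (A3 Hx). split.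
  - destruct (Rle_lt_or_eq_dec _ _ A3). rewrite Ha. left. apply aa_incr; lra.
    rewrite Ha, e. lra.
  - intros Hx'. specialize (A4 Hx'). rewrite Ha. apply aa_incr; lra.
Qed.

Lemma F_a0_nonneg (x : R) : 0 < x -> 0 <= Freal q1 q2 (aa 0) b c x.
Proof.
  intros Hx. assert (HD0 : Dm 0) by (split; lra).
  destruct (Rf_spec 0 HD0) as [HR HG]. pose proof dd_pos.
  unfold aa, Ga in *. unfold Gb in HG. rewrite rh1_0, rh2_0 in *.
  set (R0 := Rf 0) in *.
  set (y := x / R0). assert (Hy : 0 < y) by (apply Rdiv_lt_0_compat; lra).
  assert (Ex : x = R0 * y) by (unfold y; field; lra).
  assert (Pw : forall q, Rpower x q = Rpower R0 q * Rpower y q).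
  { intros q. rewrite Ex. rewrite Rpower_mult_distr; auto. }
  set (Y1 := Rpower y q1). set (Yd := Rpower y dd).
  assert (HY1 : 0 < Y1) by apply Rpower_pos. assert (HYd : 0 < Yd) by apply Rpower_pos.
  assert (Yq2 : Rpower y q2 = Y1 * Yd) by (unfold Y1, Yd; rewrite <- Rpower_plus; f_equal; unfold dd; ring).
  assert (B1 : Yd <= dd / q2 * (Y1 * Yd) + (1 - dd / q2)).
  { rewrite <- Yq2. replace Yd with (Rpower (Rpower y q2) (dd / q2)).
    apply bernoulli. apply Rpower_pos. split. apply Rdiv_lt_0_compat; lra.
    apply Rmult_lt_reg_r with q2. lra. unfold Rdiv. rewrite Rmult_assoc, Rinv_l by lra. unfold dd; lra.
    rewrite Rpower_mult. unfold Yd. f_equal. field. lra. }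
  assert (B2 : Y1 <= q1 / q2 * (Y1 * Yd) + (1 - q1 / q2)).
  { rewrite <- Yq2. replace Y1 with (Rpower (Rpower y q2) (q1 / q2)).
    apply bernoulli. apply Rpower_pos. split. apply Rdiv_lt_0_compat; lra.
    apply Rmult_lt_reg_r with q2. lra. unfold Rdiv. rewrite Rmult_assoc, Rinv_l by lra. lra.
    rewrite Rpower_mult. unfold Y1. f_equal. field. lra. }
  set (P1 := Rpower R0 q1). set (P2 := Rpower R0 q2).
  assert (HP1 : 0 < P1) by apply Rpower_pos. assert (HP2 : 0 < P2) by apply Rpower_pos.
  unfold Freal. rewrite !Pw, Rpower_plus, Rpower_plus, Yq2. rewrite !Rpower_Ropp. fold P1 P2 Y1. fold R0 in HG.
  rewrite <- HG. clear HG.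
  set (Bk1 := Y1 * Yd - q2 / dd * Yd + q1 / dd).
  set (Bk2 := q1 / dd * (Y1 * Yd) - q2 / dd * Y1 + 1).
  assert (HB1 : 0 <= Bk1).
  { unfold Bk1. assert (q2 / dd * Yd <= q2 / dd * (dd / q2 * (Y1 * Yd) + (1 - dd / q2))).
    apply Rmult_le_compat_l; auto. apply Rlt_le, Rdiv_lt_0_compat; lra.
    replace (q2 / dd * (dd / q2 * (Y1 * Yd) + (1 - dd / q2))) with (Y1 * Yd + q1 / dd) in H0.
    lra. unfold dd in *. field. split; lra. }
  assert (HB2 : 0 <= Bk2).
  { unfold Bk2. assert (q2 / dd * Y1 <= q2 / dd * (q1 / q2 * (Y1 * Yd) + (1 - q1 / q2))).
    apply Rmult_le_compat_l; auto. apply Rlt_le, Rdiv_lt_0_compat; lra.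
    replace (q2 / dd * (q1 / q2 * (Y1 * Yd) + (1 - q1 / q2))) with (q1 / dd * (Y1 * Yd) + 1) in H0.
    lra. unfold dd in *. field. split; lra. }
  match goal with |- 0 <= ?e => replace e with (P1 * P2 * Y1 * Bk1 + c * Bk2) end.
  - assert (0 <= P1 * P2 * Y1 * Bk1) by (repeat apply Rmult_le_pos; lra).
    assert (0 <= c * Bk2) by (apply Rmult_le_pos; lra). lra.
  - unfold Bk1, Bk2. rewrite Rpower_Ropp. fold P1 P2. unfold dd in *. field. repeat split; lra.
Qed.

Lemma F_shift (a x : R) : Freal q1 q2 a b c x = Freal q1 q2 (aa 0) b c x + (a - aa 0) * Rpower x q2.
Proof. unfold Freal. ring. Qed.

Lemma real_root_le (a x : R) : 0 < x -> Freal q1 q2 a b c x = 0 -> a <= aa 0.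
Proof.
  intros Hx HF. rewrite F_shift in HF. pose proof (F_a0_nonneg x Hx).
  pose proof (Rpower_pos x q2).
  destruct (Rle_or_lt a (aa 0)); auto.
  assert (0 < (a - aa 0) * Rpower x q2) by (apply Rmult_lt_0_compat; lra). lra.
Qed.

Lemma F_a0_R0 : Freal q1 q2 (aa 0) b c (Rf 0) = 0.
Proof.
  assert (HD0 : Dm 0) by (split; lra).
  destruct (Rf_spec 0 HD0) as [HR HG]. pose proof dd_pos.
  unfold aa, Ga, Freal in *. unfold Gb in HG. rewrite rh1_0, rh2_0 in *.
  rewrite <- HG. rewrite !Rpower_Ropp, Rpower_plus.
  pose proof (Rpower_pos (Rf 0) q1). pose proof (Rpower_pos (Rf 0) q2).
  unfold dd in *. field. repeat split; lra.
Qed.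

Lemma real_root_exists (a : R) : a <= aa 0 -> exists x, 0 < x /\ Freal q1 q2 a b c x = 0.
Proof.
  intros Ha. assert (HD0 : Dm 0) by (split; lra).
  destruct (Rf_spec 0 HD0) as [HR _].
  assert (HF : Freal q1 q2 a b c (Rf 0) <= 0).
  { rewrite F_shift, F_a0_R0. pose proof (Rpower_pos (Rf 0) q2).
    assert ((a - aa 0) * Rpower (Rf 0) q2 <= 0). { apply Rmult_le_0_r; lra. } lra. }
  destruct (Rle_lt_or_eq_dec _ _ HF) as [Hlt|Heq].
  - destruct (Freal_small q1 q2 a b c (c / 2) (Rf 0 / 2)) as [x0 [Hx0 Hx0']]; try lra.
    assert (HF0 : 0 < Freal q1 q2 a b c x0) by (apply Rabs_def2 in Hx0'; lra).
    destruct (Ranalysis5.IVT_interv (fun x => - Freal q1 q2 a b c x) x0 (Rf 0)) as [z [Hz1 Hz2]].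
    + intros z Hz. apply cpt_opp. apply Freal_cont. lra.
    + lra.
    + lra.
    + lra.
    + exists z. split. lra. lra.
  - exists (Rf 0). auto.
Qed.

Lemma exists_root (a : R) : a < a_star b c q1 q2 ->
  exists x y, 0 < x /\ 0 <= y /\ DeltaQ q1 q2 a b c (x, y) = RtoC 0.
Proof.
  intros Ha. rewrite astar_eq in Ha. pose proof PI2_3_2. pose proof PI_4.
  destruct (Rle_or_lt a (aa 0)) as [Ha0|Ha0].
  - destruct (real_root_exists a Ha0) as [x [Hx HF]]. exists x, 0. split; auto. split. lra.
    rewrite Delta_real by auto. rewrite HF. reflexivity.
  - destruct (Ranalysis5.IVT_interv (fun t => aa t - a) 0 (PI / 2)) as [t [Ht1 Ht2]].
    + intros z Hz. apply cpt_minus. apply aa_cont. split; lra. apply cpt_const.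
    + lra.
    + lra.
    + lra.
    + assert (t <> 0) by (intro; subst; lra).
      assert (t <> PI / 2) by (intro; subst; lra).
      assert (HDt : Dm t) by (split; lra).
      destruct (Rf_spec t HDt) as [HR HG].
      exists (Rf t * cos t), (Rf t * sin t).
      assert (0 < cos t) by (apply cos_gt_0; lra).
      assert (0 < sin t) by (apply sin_gt_0; lra).
      split. apply Rmult_lt_0_compat; lra. split. apply Rlt_le, Rmult_lt_0_compat; lra.
      apply Delta_zero_iff. rewrite Cmod_polar by auto. lra.
      rewrite Cmod_polar, Carg_polar by (auto; lra).
      apply root_char. auto. lra. split; auto. unfold aa in Ht2. lra.
Qed.

Lemma Delta_origin (a : R) : DeltaQ q1 q2 a b c (0, 0) = (c, 0).
Proof.
  unfold DeltaQ, cpow. assert (Cmod (0, 0) = 0) by (apply Cmod_0).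
  destruct (Req_EM_T (Cmod (0, 0)) 0); [|contradiction].
  unfold Cplus, Cmult, RtoC. simpl. f_equal; ring.
Qed.

Lemma trans_core (x y : R -> R) :
  locally (a_star b c q1 q2) (fun a => DeltaQ q1 q2 a b c (x a, y a) = RtoC 0) ->
  ex_derive x (a_star b c q1 q2) -> ex_derive y (a_star b c q1 q2) ->
  x (a_star b c q1 q2) = 0 -> 0 < y (a_star b c q1 q2) ->
  Derive x (a_star b c q1 q2) < 0.
Proof.
  set (A := a_star b c q1 q2). intros Hloc Hx Hy Hx0 Hy0.
  pose proof PI2_3_2. pose proof PI_4.
  pose proof (ex_derive_cpt x A Hx) as Cx. pose proof (ex_derive_cpt y A Hy) as Cy.
  assert (Cxy : continuity_pt (fun a => x a / y a) A) by (apply cpt_div; auto; lra).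
  assert (L1 : locally A (fun a => 0 < y a)) by (apply locally_cont_gt; auto).
  assert (L2 : locally A (fun a => -1 < x a / y a)).
  { apply (locally_cont_gt (fun a => x a / y a)); auto. rewrite Hx0. unfold Rdiv. rewrite Rmult_0_l. lra. }
  set (th := fun a => PI / 2 - atan (x a / y a)).
  assert (Hth0 : th A = PI / 2) by (unfold th; rewrite Hx0; unfold Rdiv; rewrite Rmult_0_l, atan_0; ring).
  assert (L3 : locally A (fun a => aa (th a) = a)).
  { eapply filter_imp; [|exact (filter_and _ _ Hloc (filter_and _ _ L1 L2))].
    intros a [HD [Hya Hr]].
    assert (HC : Carg (x a, y a) = th a) by (unfold th; apply Carg_up; auto).
    assert (Carg (x a, y a) < 3).
    { rewrite HC. unfold th. assert (atan (-1) < atan (x a / y a)) by (apply atan_increasing; auto).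
      assert (atan (-1) = - (PI / 4)) by (rewrite <- atan_1, <- atan_opp; f_equal; lra).
      lra. }
    symmetry. rewrite <- HC. apply upper_root_aa; auto. }
  destruct Hx as [dx Hdx]. destruct Hy as [dy Hdy].
  assert (Dth : is_derive th A (- (/ (1 + (x A / y A) ^ 2) * ((dx * y A - dy * x A) / (y A)²)))).
  { unfold th. apply is_derive_val with (0 - (/ (1 + (x A / y A) ^ 2) * ((dx * y A - dy * x A) / (y A)²))).
    apply id_minus. apply id_const.
    apply (id_comp (fun a => x a / y a) atan). apply id_div; auto. lra.
    apply is_derive_Reals. apply derivable_pt_lim_atan. simpl. ring. }
  assert (Daa : is_derive aa (th A) (aa' (PI / 2))).
  { rewrite Hth0. apply aa_derive. apply Dm_pi2. lra. }
  pose proof (id_comp th aa A _ _ Dth Daa) as Dcomp.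
  assert (Did : is_derive (fun a => aa (th a)) A 1).
  { apply is_derive_ext_loc with (f := fun a => a).
    eapply filter_imp; [|exact L3]. intros a Ha. auto.
    apply id_id. }
  pose proof (is_derive_unique _ _ _ Dcomp) as U1. pose proof (is_derive_unique _ _ _ Did) as U2.
  rewrite U1 in U2. clear U1.
  rewrite (is_derive_unique _ _ _ Hdx).
  assert (E0 : x A / y A = 0) by (rewrite Hx0; unfold Rdiv; ring).
  rewrite E0, Hx0 in U2.
  pose proof (aa'_pos (PI / 2) ltac:(lra)) as Hpos.
  assert (U3 : aa' (PI / 2) * (- dx / y A) = 1).
  { rewrite <- U2. simpl. unfold Rsqr. change (NormedModule.sort R_AbsRing R_NormedModule) with R in dx. field. lra. }
  destruct (Rlt_or_le dx 0); auto. exfalso.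
  assert (- dx / y A <= 0).
  { unfold Rdiv. apply Rmult_le_0_r. lra. apply Rlt_le, Rinv_0_lt_compat; lra. }
  assert (aa' (PI / 2) * (- dx / y A) <= 0) by (apply Rmult_le_0_l; lra). lra.
Qed.

Lemma Freal_pos_nonneg (a x : R) : 0 <= a -> 0 <= b -> 0 < x -> 0 < Freal q1 q2 a b c x.
Proof.
  intros Ha Hb Hx. unfold Freal.
  pose proof (Rpower_pos x (q1 + q2)). pose proof (Rpower_pos x q2). pose proof (Rpower_pos x q1).
  assert (0 <= a * Rpower x q2) by (apply Rmult_le_pos; lra).
  assert (0 <= b * Rpower x q1) by (apply Rmult_le_pos; lra). lra.
Qed.

Lemma DY_pos (a r t : R) : 0 <= a -> 0 <= b -> 0 < r -> 0 < t <= PI / 2 -> 0 < DY a r t.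
Proof.
  intros Ha Hb Hr Ht. unfold DY. pose proof PI_RGT_0.
  assert (0 < sin ((q1 + q2) * t)) by (apply sin_gt_0; nra).
  assert (0 <= sin (q2 * t)) by (apply sin_ge_0; nra).
  assert (0 <= sin (q1 * t)) by (apply sin_ge_0; nra).
  pose proof (Rpower_pos r (q1 + q2)). pose proof (Rpower_pos r q2). pose proof (Rpower_pos r q1).
  assert (0 < Rpower r (q1 + q2) * sin ((q1 + q2) * t)) by (apply Rmult_lt_0_compat; lra).
  assert (0 <= a * (Rpower r q2 * sin (q2 * t))) by (apply Rmult_le_pos; [lra| apply Rmult_le_pos; lra]).
  assert (0 <= b * (Rpower r q1 * sin (q1 * t))) by (apply Rmult_le_pos; [lra| apply Rmult_le_pos; lra]).
  lra.
Qed.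


Lemma imag_root (w : R) : 0 < w -> DeltaQ q1 q2 (a_star b c q1 q2) b c (0, w) = RtoC 0 <-> w = Rf (PI / 2).
Proof.
  intros Hw. pose proof PI2_3_2. pose proof PI_4.
  assert (HC : Cmod (0, w) = w).
  { replace (0, w) with (w * cos (PI / 2), w * sin (PI / 2)) by (rewrite cos_PI2, sin_PI2; f_equal; ring).
    apply Cmod_polar; auto. }
  assert (HA : Carg (0, w) = PI / 2).
  { rewrite Carg_up by auto. unfold Rdiv. rewrite Rmult_0_l, atan_0. ring. }
  rewrite Delta_zero_iff by lra. rewrite HC, HA.
  rewrite root_char by lra. rewrite astar_eq. split.
  - intros [Hb _]. apply Rf_unique; auto. apply Dm_pi2.
  - intros ->. destruct (Rf_spec (PI / 2) Dm_pi2). split; auto.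
Qed.

Lemma part3 :
     (forall a : R, 0 <= a -> 0 <= b ->
        forall s : C, DeltaQ q1 q2 a b c s = RtoC 0 -> Re s < 0) /\
     (forall a : R,
        (exists w : R, 0 < w /\ DeltaQ q1 q2 a b c (0, w) = RtoC 0
                             /\ DeltaQ q1 q2 a b c (0, - w) = RtoC 0)
        <-> a = a_star b c q1 q2) /\
     (forall s : R -> C,
        (exists eps : R, 0 < eps /\
           forall a : R, Rabs (a - a_star b c q1 q2) < eps ->
             DeltaQ q1 q2 a b c (s a) = RtoC 0) ->
        ex_derive (fun a => Re (s a)) (a_star b c q1 q2) ->
        ex_derive (fun a => Im (s a)) (a_star b c q1 q2) ->
        Re (s (a_star b c q1 q2)) = 0 ->
        Derive (fun a => Re (s a)) (a_star b c q1 q2) < 0) /\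
     (forall a : R,
        (forall s : C, DeltaQ q1 q2 a b c s = RtoC 0 -> Re s < 0)
        <-> a_star b c q1 q2 < a) /\
     (forall a : R,
        (exists s : C, 0 < Re s /\ DeltaQ q1 q2 a b c s = RtoC 0
                               /\ DeltaQ q1 q2 a b c (Cconj s) = RtoC 0)
        <-> a < a_star b c q1 q2).
Proof.
  pose proof PI2_3_2 as HPI. pose proof PI_4 as HPI4.
  assert (Hstar0 : aa 0 < a_star b c q1 q2) by (rewrite astar_eq; apply aa_incr; lra).
  assert (Horig : forall a, DeltaQ q1 q2 a b c (0, 0) <> RtoC 0).
  { intros a E. rewrite Delta_origin in E. unfold RtoC in E. injection E. lra. }
  assert (Hclosed : forall a x y, 0 <= x -> DeltaQ q1 q2 a b c (x, y) = RtoC 0 ->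
            a <= a_star b c q1 q2 /\ (0 < x -> a < a_star b c q1 q2)).
  { intros a x y Hx HD.
    destruct (Rtotal_order y 0) as [Hy|[Hy|Hy]].
    - apply (quad_root a x (- y)); [lra|auto|].
      apply (Delta_conj_iff a x y); [lra|]. exact HD.
    - subst. destruct (Rle_lt_or_eq_dec _ _ Hx) as [Hx'|Hx'].
      + rewrite Delta_real in HD by auto. injection HD. intros HF.
        pose proof (real_root_le a x Hx' HF). split; intros; lra.
      + subst. exfalso. apply (Horig a HD).
    - apply (quad_root a x y); auto. }
  split; [|split; [|split; [|split]]].
  -
    intros a Ha Hb [x y] HD. simpl. destruct (Rlt_or_le x 0); auto. exfalso.
    destruct (Rtotal_order y 0) as [Hy|[Hy|Hy]].
    + apply (Delta_conj_iff a x y) in HD; [|lra].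
      assert (Hm : 0 < Cmod (x, - y)) by (apply Cmod_pos2; lra).
      destruct (Carg_up_range x (- y) ltac:(lra)) as [[A1 A2] [A3 _]].
      apply Delta_zero_iff in HD; [|lra]. destruct HD as [_ HD].
      pose proof (DY_pos a (Cmod (x, - y)) (Carg (x, - y)) Ha Hb Hm ltac:(split; auto)). lra.
    + subst. destruct (Rle_lt_or_eq_dec _ _ H) as [Hx'|Hx'].
      * rewrite Delta_real in HD by auto. injection HD. intros HF.
        pose proof (Freal_pos_nonneg a x Ha Hb Hx'). lra.
      * subst. apply (Horig a HD).
    + assert (Hm : 0 < Cmod (x, y)) by (apply Cmod_pos2; lra).
      destruct (Carg_up_range x y Hy) as [[A1 A2] [A3 _]].
      apply Delta_zero_iff in HD; [|lra]. destruct HD as [_ HD].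
      pose proof (DY_pos a (Cmod (x, y)) (Carg (x, y)) Ha Hb Hm ltac:(split; auto)). lra.
  -
    intros a. split.
    + intros [w [Hw [HD1 HD2]]].
      assert (HA : Carg (0, w) = PI / 2).
      { rewrite Carg_up by auto. unfold Rdiv. rewrite Rmult_0_l, atan_0. ring. }
      pose proof (upper_root_aa a 0 w Hw ltac:(rewrite HA; lra) HD1). rewrite HA in H.
      rewrite astar_eq. auto.
    + intros ->. destruct (Rf_spec (PI / 2) Dm_pi2) as [HR _].
      exists (Rf (PI / 2)). split; auto.
      assert (HD : DeltaQ q1 q2 (a_star b c q1 q2) b c (0, Rf (PI / 2)) = RtoC 0) by (apply imag_root; auto).
      split; auto. apply Delta_conj_iff; auto. lra.
  -
    intros s [eps [He Hs]] Hdx Hdy Hre.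
    set (A := a_star b c q1 q2) in *.
    set (x := fun a => fst (s a)). set (y := fun a => snd (s a)).
    assert (Hloc : locally A (fun a => DeltaQ q1 q2 a b c (x a, y a) = RtoC 0)).
    { apply locally_of_delta. exists eps. split. exact He. intros a Ha.
      unfold x, y. rewrite <- surjective_pairing. apply Hs; auto. }
    assert (Hx0 : x A = 0) by exact Hre.
    change (Derive x A < 0).
    assert (Hy0 : y A <> 0).
    { intro E. apply locally_singleton in Hloc. rewrite Hx0, E in Hloc. apply (Horig A Hloc). }
    destruct (Rlt_or_le 0 (y A)) as [Hyp|Hyn].
    + apply trans_core with (y := y); auto.
    + apply trans_core with (y := fun a => - y a); auto.
      * assert (Ly : locally A (fun a => y a < 0)).
        { apply (locally_cont_lt y A 0). apply ex_derive_cpt. exact Hdy. lra. }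
        eapply filter_imp; [|exact (filter_and _ _ Hloc Ly)].
        intros a [HD Hya]. apply Delta_conj_iff; auto. lra.
      * apply (ex_derive_opp y A). exact Hdy.
      * fold A. destruct (Rle_lt_or_eq_dec _ _ Hyn); [lra| contradiction].
  -
    intros a. split.
    + intros Hall. destruct (Rtotal_order a (a_star b c q1 q2)) as [Hlt|[Heq|Hgt]]; auto.
      * exfalso. destruct (exists_root a Hlt) as [x [y [Hx [Hy HD]]]].
        specialize (Hall _ HD). simpl in Hall. lra.
      * exfalso. subst. destruct (Rf_spec (PI / 2) Dm_pi2) as [HR _].
        assert (HD : DeltaQ q1 q2 (a_star b c q1 q2) b c (0, Rf (PI / 2)) = RtoC 0) by (apply imag_root; auto).
        specialize (Hall _ HD). simpl in Hall. lra.
    + intros Ha [x y] HD. simpl. destruct (Rlt_or_le x 0); auto.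
      destruct (Hclosed a x y H HD). lra.
  -
    intros a. split.
    + intros [[x y] [Hx [HD _]]]. simpl in Hx.
      destruct (Hclosed a x y ltac:(lra) HD). auto.
    + intros Ha. destruct (exists_root a Ha) as [x [y [Hx [Hy HD]]]].
      exists (x, y). simpl. split; auto. split; auto.
      unfold Cconj. simpl. destruct (Rle_lt_or_eq_dec _ _ Hy).
      * apply Delta_conj_iff; auto. lra.
      * subst. rewrite Ropp_0. auto.
Qed.

End Main.

Theorem proposition1 (q1 q2 : R) (Hq1 : 0 < q1) (Hq12 : q1 < q2) (Hq2 : q2 < 1) :
  (* 1 *)
  (forall a b c : R, c < 0 ->
     exists x : R, 0 < x /\ DeltaQ q1 q2 a b c (RtoC x) = RtoC 0) /\
  (* 2 *)
  (forall a b c : R, DeltaQ q1 q2 a b c (RtoC 0) = RtoC 0 <-> c = 0) /\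
  (* 3 *)
  (forall b c : R, 0 < c ->
     (* (a) *)
     (forall a : R, 0 <= a -> 0 <= b ->
        forall s : C, DeltaQ q1 q2 a b c s = RtoC 0 -> Re s < 0) /\
     (* (b) *)
     (forall a : R,
        (exists w : R, 0 < w /\ DeltaQ q1 q2 a b c (0, w) = RtoC 0
                             /\ DeltaQ q1 q2 a b c (0, - w) = RtoC 0)
        <-> a = a_star b c q1 q2) /\
     (* (c) *)
     (forall s : R -> C,
        (exists eps : R, 0 < eps /\
           forall a : R, Rabs (a - a_star b c q1 q2) < eps ->
             DeltaQ q1 q2 a b c (s a) = RtoC 0) ->
        ex_derive (fun a => Re (s a)) (a_star b c q1 q2) ->
        ex_derive (fun a => Im (s a)) (a_star b c q1 q2) ->
        Re (s (a_star b c q1 q2)) = 0 ->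
        Derive (fun a => Re (s a)) (a_star b c q1 q2) < 0) /\
     (* (d) *)
     (forall a : R,
        (forall s : C, DeltaQ q1 q2 a b c s = RtoC 0 -> Re s < 0)
        <-> a_star b c q1 q2 < a) /\
     (* (e) *)
     (forall a : R,
        (exists s : C, 0 < Re s /\ DeltaQ q1 q2 a b c s = RtoC 0
                               /\ DeltaQ q1 q2 a b c (Cconj s) = RtoC 0)
        <-> a < a_star b c q1 q2)).
Proof.
  split; [|split].
  - intros a b c Hc.
    destruct (Freal_small q1 q2 a b c (- c / 2) 1) as [x0 [Hx0 Hx0']]; try lra.
    assert (HF0 : Freal q1 q2 a b c x0 < 0) by (apply Rabs_def2 in Hx0'; lra).
    destruct (Freal_large q1 q2 a b c) as [x1 [Hx1 HF1]]; try lra.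
    assert (Hlt : x0 < x1).
    { destruct (Rle_lt_or_eq_dec x0 x1) as [H|H]; [lra|auto|subst; lra]. }
    destruct (Ranalysis5.IVT_interv (Freal q1 q2 a b c) x0 x1) as [z [Hz1 Hz2]].
    + intros z Hz. apply Freal_cont. lra.
    + auto.
    + auto.
    + auto.
    + exists z. split. lra. unfold RtoC. rewrite Delta_real by lra. rewrite Hz2. reflexivity.
  - intros a b c. change (DeltaQ q1 q2 a b c (0, 0) = RtoC 0 <-> c = 0).
    rewrite Delta_origin. unfold RtoC. split.
    + intros H. injection H. auto.
    + intros ->. reflexivity.
  - intros b c Hc. exact (part3 q1 q2 c b Hq1 Hq12 Hq2 Hc).
Qed.
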